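(* Let $\lambda>0$ and $a\in(0,1/2)$. The limit $$\textsc{f}(\lambda,a):=\lim_{N\to\infty,\ N \text{ even}}\frac1N\log Z^{\lambda,a}_N-\log 2$$ exists and $$\textsc{f}(\lambda,a)=\max\Big\{0,\ \max_{d\in[2a,1]}\Big(\textsc{f}(\lambda)\big(1-\tfrac{2a}{d}\big)-\tfrac{2a}{d}q(d)\Big)\Big\}.$$ If $\textsc{f}(\lambda,a)>0$ (so that $\lambda>2$), the inner maximum over $d\in[2a,1]$ is attained at $$d=d_\lambda:=\sqrt{1-\exp(-2\textsc{f}(\lambda))}=1-\frac{2}{\lambda},$$ and consequently $$\textsc{f}(\lambda,a)=\Big(\textsc{f}(\lambda)\big(1-\tfrac{2a}{d_\lambda}\big)-\tfrac{2a}{d_\lambda}q(d_\lambda)\Big)_+=\Big(\textsc{f}(\lambda)-a\log\Big(\frac{1+d_\lambda}{1-d_\lambda}\Big)\Big)_+ .$$ The function $(a,\lambda)\mapsto\textsc{f}(\lambda,a)$ is analytic except on the critical curve $\lambda=\lambda_c(a)$, where $\lambda_c(a)$ is the unique solution of $$\textsc{f}(\lambda)=a\log\Big(\frac{1+d_\lambda}{1-d_\lambda}\Big)=a\log(\lambda-1),$$ and the right derivative of $\lambda\mapsto \textsc{f}(\lambda,a)$ at $\lambda=\lambda_c(a)$ is positive (the transition is of first order).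
   Context: For a real $s$, $\langle s\rangle$ denotes the smallest even integer $\ge s$. For $N$ even and $a\in(0,1/2)$, let $\mathcal S^a_N$ be the set of $\eta=(\eta_x)_{x\in\{0,\dots,N\}}$ with $\eta_x\in\mathbb Z_{\ge0}$ for all $x$, $\eta_0=\eta_N=\langle aN\rangle$ and $|\eta_{x+1}-\eta_x|=1$ for all $x$. Let $H(\eta)=\#\{x\in\{0,\dots,N\}:\eta_x=0\}$ and $Z^{\lambda,a}_N=\sum_{\eta\in\mathcal S^a_N}\lambda^{H(\eta)}$. Define $\textsc{f}(\lambda)=\log\big(\frac{\lambda}{2\sqrt{\lambda-1}}\big)$ for $\lambda>2$ and $\textsc{f}(\lambda)=0$ for $\lambda\le2$ (the free energy of the pinning model with zero boundary conditions). For $d\in[0,1]$, $q(d)=\frac12\big[(1+d)\log(1+d)+(1-d)\log(1-d)\big]$ (with $0\log0=0$); equivalently $q(d)=-\lim_{N\to\infty}\frac1N\log\#\{\text{simple random walk paths of length }N\text{ from }0\text{ to }\langle dN\rangle\}+\log2$. *)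

(* Defs.v *)
From Stdlib Require Import Reals Lra ZArith List.
From Coquelicot Require Import Coquelicot.
Open Scope R_scope.

(* <s> : smallest even integer >= s, i.e. 2 * ceil(s/2).
   Stdlib's [up x] is the unique integer with x < up x <= x + 1, so
   ceil y = 1 - up (-y). *)
Definition even_ceil (s : R) : Z := (2 * (1 - up (- (s / 2))))%Z.

(* A configuration eta in S^a_N is encoded by its starting height
   eta_0 = <aN> and its list of N increments (true = +1, false = -1). *)
Fixpoint all_steps (n : nat) : list (list bool) :=
  match n with
  | O => nil :: nil
  | S m => map (cons true) (all_steps m) ++ map (cons false) (all_steps m)
  end.

Fixpoint heights (h : Z) (s : list bool) : list Z :=
  match s with
  | nil => h :: nil
  | b :: s' => h :: heights (if b then (h + 1)%Z else (h - 1)%Z) s'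
  end.

Definition valid_path (h : Z) (s : list bool) : bool :=
  forallb (fun z => Z.leb 0 z) (heights h s) && Z.eqb (last (heights h s) h) h.

Definition contacts (h : Z) (s : list bool) : nat :=
  length (filter (fun z => Z.eqb z 0) (heights h s)).

Definition Zpart (lam a : R) (N : nat) : R :=
  let h := even_ceil (a * INR N) in
  fold_right Rplus 0
    (map (fun s => if valid_path h s then lam ^ contacts h s else 0) (all_steps N)).

Definition fpin (lam : R) : R :=
  if Rlt_dec 2 lam then ln (lam / (2 * sqrt (lam - 1))) else 0.

(* q(d); note (1-d) * ln (1-d) = 0 at d = 1 since 0 * _ = 0 (0 log 0 = 0) *)
Definition q (d : R) : R :=
  / 2 * ((1 + d) * ln (1 + d) + (1 - d) * ln (1 - d)).

Definition gvar (lam a d : R) : R :=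
  fpin lam * (1 - 2 * a / d) - 2 * a / d * q d.

Definition dlam (lam : R) : R := sqrt (1 - exp (- 2 * fpin lam)).

Definition Ffree (lam a : R) : R :=
  real (Lim_seq (fun n => ln (Zpart lam a (2 * n)) / INR (2 * n) - ln 2)).

(* Real analyticity of a function of two real variables at (x0, y0):
   locally equal to an absolutely convergent double power series
   (summed along the diagonals i + j = n). *)
Definition analytic_at2 (F : R -> R -> R) (x0 y0 : R) : Prop :=
  exists r, 0 < r /\ exists c : nat -> nat -> R,
    forall x y, Rabs (x - x0) < r -> Rabs (y - y0) < r ->
      ex_series (fun n => sum_f_R0 (fun i =>
          Rabs (c i (n - i)%nat * (x - x0) ^ i * (y - y0) ^ (n - i))) n) /\
      is_series (fun n => sum_f_R0 (fun i =>
          c i (n - i)%nat * (x - x0) ^ i * (y - y0) ^ (n - i)) n) (F x y).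

(* Main.v *)
Require Import Defs.
From Stdlib Require Import Reals Lra Lia ZArith List Classical.
From Coquelicot Require Import Coquelicot.
Open Scope R_scope.

Definition wt (l : R) (z : Z) : R := if Z.eqb z 0 then l else 1.
Fixpoint PT (l : R) (psi : Z -> R) (M : nat) (x : Z) : R :=
  match M with
  | O => if Z.leb 0 x then psi x else 0
  | S M' => if Z.leb 0 x then wt l x * (PT l psi M' (x+1) + PT l psi M' (x-1)) else 0
  end.
Definition ind (y z : Z) : R := if Z.eqb z y then 1 else 0.
Definition psw (l : R) (y z : Z) : R := wt l z * ind y z.

Definition valid' (x y : Z) (s : list bool) : bool :=
  andb (forallb (fun z => Z.leb 0 z) (heights x s)) (Z.eqb (last (heights x s) x) y).

Lemma last_heights_def : forall s x d d', last (heights x s) d = last (heights x s) d'.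
Proof.
  induction s as [|b s IH]; intros x d d'; simpl; auto.
  destruct s; simpl; auto. destruct b0; simpl in *; auto.
Qed.

Lemma valid'_cons : forall x y b s,
  valid' x y (b :: s) = andb (Z.leb 0 x) (valid' (if b then (x+1)%Z else (x-1)%Z) y s).
Proof.
  intros. unfold valid'. simpl.
  assert (E : last (x :: heights (if b then (x + 1)%Z else (x - 1)%Z) s) x =
              last (heights (if b then (x + 1)%Z else (x - 1)%Z) s) (if b then (x + 1)%Z else (x - 1)%Z)).
  { destruct s; simpl; [destruct b; reflexivity|].
    rewrite (last_heights_def _ _ x (if b then (x + 1)%Z else (x - 1)%Z)). reflexivity. }
  destruct b; simpl in *; destruct s; simpl in *; try (destruct (Z.leb 0 x); reflexivity); rewrite ?E; destruct (Z.leb 0 x); simpl; try reflexivity.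
Qed.

Lemma contacts_cons : forall l x b s,
  l ^ contacts x (b :: s) = wt l x * l ^ contacts (if b then (x+1)%Z else (x-1)%Z) s.
Proof.
  intros. unfold contacts, wt. simpl. destruct (Z.eqb x 0); simpl; ring.
Qed.

Lemma fold_app : forall (l1 l2 : list R),
  fold_right Rplus 0 (l1 ++ l2) = fold_right Rplus 0 l1 + fold_right Rplus 0 l2.
Proof. induction l1; intros; simpl; [ring| rewrite IHl1; ring]. Qed.

Lemma fold_zero : forall (A : Type) (f : A -> R) (l : list A),
  (forall a, f a = 0) -> fold_right Rplus 0 (map f l) = 0.
Proof. induction l; intros H; simpl; auto. rewrite H, IHl; auto; ring. Qed.

Lemma fold_scal : forall (A : Type) (f : A -> R) (c : R) (l : list A),
  fold_right Rplus 0 (map (fun a => c * f a) l) = c * fold_right Rplus 0 (map f l).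
Proof. induction l; simpl; [ring|rewrite IHl; ring]. Qed.

Lemma sum_steps_PT : forall l M x y,
  fold_right Rplus 0 (map (fun s => if valid' x y s then l ^ contacts x s else 0) (all_steps M))
  = PT l (psw l y) M x.
Proof.
  intros l M. induction M as [|M IH]; intros x y.
  - simpl. unfold valid', psw, ind, wt, contacts. simpl.
    destruct (Z.leb 0 x); simpl; [|ring].
    destruct (Z.eqb x y) eqn:E; destruct (Z.eqb x 0); simpl; ring.
  - simpl. rewrite map_app, fold_app, !map_map.
    destruct (Z.leb 0 x) eqn:Ex.
    + rewrite <- !IH.
      assert (H : forall (b : bool) L, map (fun s => if valid' x y (b :: s) then l ^ contacts x (b :: s) else 0) L
        = map (fun s => wt l x * (if valid' (if b then (x+1)%Z else (x-1)%Z) y s then l ^ contacts (if b then (x+1)%Z else (x-1)%Z) s else 0)) L).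
      { intros b L. apply map_ext. intros s. rewrite valid'_cons, contacts_cons, Ex. simpl. destruct (valid' _ y s); ring. }
      rewrite (H true), (H false), !fold_scal. ring.
    + rewrite !fold_zero; [ring| |]; intros s; rewrite valid'_cons, Ex; reflexivity.
Qed.

Lemma Zpart_PT : forall l a N,
  Zpart l a N = PT l (psw l (even_ceil (a * INR N))) N (even_ceil (a * INR N)).
Proof. intros. unfold Zpart. rewrite <- sum_steps_PT. reflexivity. Qed.

Fixpoint sumr (f : nat -> R) (n : nat) : R :=
  match n with O => 0 | S n' => sumr f n' + f n' end.

Lemma sumr_ext : forall f g n, (forall k, (k < n)%nat -> f k = g k) -> sumr f n = sumr g n.
Proof. intros f g n; induction n; intros H; simpl; auto. rewrite IHn, H; auto. Qed.
Lemma sumr_add : forall f g n, sumr (fun k => f k + g k) n = sumr f n + sumr g n.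
Proof. intros f g n; induction n; simpl; [ring|rewrite IHn; ring]. Qed.
Lemma sumr_scal : forall c f n, sumr (fun k => c * f k) n = c * sumr f n.
Proof. intros c f n; induction n; simpl; [ring|rewrite IHn; ring]. Qed.
Lemma sumr_shift : forall f n, sumr f (S n) = f O + sumr (fun k => f (S k)) n.
Proof. intros f n; induction n; simpl in *; [ring|rewrite IHn; ring]. Qed.
Lemma sumr_zero : forall f n, (forall k, (k < n)%nat -> f k = 0) -> sumr f n = 0.
Proof. intros f n; induction n; intros H; simpl; auto. rewrite IHn, H; auto; ring. Qed.
Lemma sumr_le : forall f g n, (forall k, (k < n)%nat -> f k <= g k) -> sumr f n <= sumr g n.
Proof. intros f g n; induction n; intros H; simpl; [lra|]. specialize (IHn (fun k Hk => H k (Nat.lt_lt_succ_r _ _ Hk))). specialize (H n (Nat.lt_succ_diag_r n)). lra. Qed.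
Lemma sumr_const : forall c n, sumr (fun _ => c) n = INR n * c.
Proof. intros c n; induction n; simpl sumr; [simpl; ring|rewrite IHn, S_INR; ring]. Qed.
Lemma sumr_lt : forall f n T, (0 < n)%nat -> (forall k, (k < n)%nat -> f k < T) -> sumr f n < INR n * T.
Proof.
  intros f n T Hn H. destruct n; [lia|]. induction n.
  - simpl. specialize (H O ltac:(lia)). lra.
  - simpl sumr. rewrite S_INR. assert (sumr f (S n) < INR (S n) * T) by (apply IHn; [lia| intros; apply H; lia]).
    specialize (H (S n) ltac:(lia)). simpl in *. lra.
Qed.
Lemma pigeon : forall f n S, (0 < n)%nat -> S <= sumr f n -> exists k, (k < n)%nat /\ S / INR n <= f k.
Proof.
  intros f n S Hn HS. apply NNPP. intros Hne.
  assert (Hl : sumr f n < INR n * (S / INR n)).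
  { apply sumr_lt; auto. intros k Hk. apply Rnot_le_lt. intros Hc. apply Hne. exists k; auto. }
  assert (0 < INR n) by (apply lt_0_INR; auto).
  replace (INR n * (S / INR n)) with S in Hl by (field; lra). lra.
Qed.

Lemma wt_nonneg : forall l z, 0 <= l -> 0 <= wt l z.
Proof. intros; unfold wt; destruct (Z.eqb z 0); lra. Qed.

Lemma PT_neg : forall l psi M x, (x < 0)%Z -> PT l psi M x = 0.
Proof. intros l psi M x Hx. destruct M; simpl; destruct (Z.leb_spec 0 x); try lia; reflexivity. Qed.

Lemma PT_nonneg : forall l psi M x, 0 <= l -> (forall z, (0 <= z)%Z -> 0 <= psi z) -> 0 <= PT l psi M x.
Proof.
  intros l psi M; induction M; intros x Hl Hp; simpl; destruct (Z.leb_spec 0 x); try lra; auto.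
  apply Rmult_le_pos; [apply wt_nonneg; auto|]. apply Rplus_le_le_0_compat; auto.
Qed.

Lemma PT_mono : forall l p1 p2 M x, 0 <= l -> (forall z, (0 <= z)%Z -> p1 z <= p2 z) -> PT l p1 M x <= PT l p2 M x.
Proof.
  intros l p1 p2 M; induction M; intros x Hl Hp; simpl; destruct (Z.leb_spec 0 x); try lra; auto.
  apply Rmult_le_compat_l; [apply wt_nonneg; auto|]. apply Rplus_le_compat; auto.
Qed.

Lemma PT_ext_range : forall l p1 p2 M x, (forall z, (0 <= z)%Z -> (z <= x + Z.of_nat M)%Z -> p1 z = p2 z) ->
  PT l p1 M x = PT l p2 M x.
Proof.
  intros l p1 p2 M; induction M; intros x Hp; simpl; destruct (Z.leb_spec 0 x); auto.
  - apply Hp; lia.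
  - rewrite (IHM (x+1)%Z), (IHM (x-1)%Z); auto; intros z H1 H2; apply Hp; lia.
Qed.

Lemma PT_scal : forall l c psi M x, PT l (fun z => c * psi z) M x = c * PT l psi M x.
Proof. intros l c psi M; induction M; intros x; simpl; destruct (Z.leb 0 x); try ring. rewrite !IHM; ring. Qed.
Lemma PT_add : forall l p1 p2 M x, PT l (fun z => p1 z + p2 z) M x = PT l p1 M x + PT l p2 M x.
Proof. intros l p1 p2 M; induction M; intros x; simpl; destruct (Z.leb 0 x); try ring. rewrite !IHM; ring. Qed.
Lemma PT_zero : forall l M x, PT l (fun _ => 0) M x = 0.
Proof. intros l M; induction M; intros x; simpl; destruct (Z.leb 0 x); try ring. rewrite !IHM; ring. Qed.
Lemma PT_sumr : forall l g n M x, PT l (fun z => sumr (fun k => g k z) n) M x = sumr (fun k => PT l (g k) M x) n.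
Proof.
  intros l g n; induction n; intros M x; simpl.
  - apply PT_zero.
  - rewrite (PT_add l (fun z => sumr (fun k => g k z) n) (g n)). rewrite IHn. reflexivity.
Qed.

Lemma PT_super : forall l psi phi c M x, 0 <= l -> 0 <= c ->
  (forall z, (0 <= z)%Z -> psi z <= phi z) -> (forall z, (0 <= z)%Z -> 0 <= phi z) ->
  (forall z, (0 <= z)%Z -> wt l z * (phi (z+1)%Z + (if Z.eqb z 0 then 0 else phi (z-1)%Z)) <= c * phi z) ->
  (0 <= x)%Z -> PT l psi M x <= c ^ M * phi x.
Proof.
  intros l psi phi c M; induction M; intros x Hl Hc Hpp Hp0 Hs Hx; simpl; destruct (Z.leb_spec 0 x); try lia.
  - rewrite Rmult_1_l; auto.
  - assert (H1 : PT l psi M (x+1) <= c ^ M * phi (x+1)%Z) by (apply IHM; auto; lia).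
    assert (H2 : PT l psi M (x-1) <= c ^ M * (if Z.eqb x 0 then 0 else phi (x-1)%Z)).
    { destruct (Z.eqb_spec x 0). rewrite PT_neg by lia. lra. apply IHM; auto; lia. }
    specialize (Hs x Hx). pose proof (wt_nonneg l x Hl). pose proof (pow_le c M Hc).
    apply Rle_trans with (wt l x * (c ^ M * (phi (x + 1)%Z + (if Z.eqb x 0 then 0 else phi (x - 1)%Z)))).
    + apply Rmult_le_compat_l; auto. lra.
    + replace (wt l x * (c ^ M * (phi (x + 1)%Z + (if Z.eqb x 0 then 0 else phi (x - 1)%Z)))) with
        (c ^ M * (wt l x * (phi (x + 1)%Z + (if Z.eqb x 0 then 0 else phi (x - 1)%Z)))) by ring.
      replace (c * c ^ M * phi x) with (c ^ M * (c * phi x)) by ring.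
      apply Rmult_le_compat_l; auto.
Qed.

Lemma PT_eigen : forall l psi c M x,
  (forall z, (0 <= z)%Z -> wt l z * (psi (z+1)%Z + (if Z.eqb z 0 then 0 else psi (z-1)%Z)) = c * psi z) ->
  (0 <= x)%Z -> PT l psi M x = c ^ M * psi x.
Proof.
  intros l psi c M; induction M; intros x Hs Hx; simpl; destruct (Z.leb_spec 0 x); try lia.
  - ring.
  - rewrite (IHM (x+1)%Z) by (auto; lia).
    assert (H2 : PT l psi M (x-1) = c ^ M * (if Z.eqb x 0 then 0 else psi (x-1)%Z)).
    { destruct (Z.eqb_spec x 0). rewrite PT_neg by lia. ring. apply IHM; auto; lia. }
    rewrite H2. specialize (Hs x Hx).
    replace (c * c ^ M * psi x) with (c ^ M * (c * psi x)) by ring. rewrite <- Hs. ring.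
Qed.

Lemma sumr_ind : forall f n z, (0 <= z)%Z -> (z < Z.of_nat n)%Z ->
  sumr (fun k => f k * ind (Z.of_nat k) z) n = f (Z.to_nat z).
Proof.
  intros f n; induction n; intros z H1 H2; [lia|]. simpl.
  unfold ind at 2. destruct (Z.eqb_spec z (Z.of_nat n)).
  - rewrite sumr_zero. subst z. rewrite Nat2Z.id. ring.
    intros k Hk. unfold ind. destruct (Z.eqb_spec z (Z.of_nat k)); [lia|ring].
  - rewrite IHn by lia. ring.
Qed.

Lemma PT_repr : forall l psi M x R, (0 <= x)%Z -> (x + Z.of_nat M < Z.of_nat R)%Z ->
  PT l psi M x = sumr (fun k => psi (Z.of_nat k) * PT l (ind (Z.of_nat k)) M x) R.
Proof.
  intros l psi M x R Hx HR.
  rewrite (PT_ext_range l psi (fun z => sumr (fun k => psi (Z.of_nat k) * ind (Z.of_nat k) z) R)).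
  - rewrite PT_sumr. apply sumr_ext. intros k _. apply PT_scal.
  - intros z H1 H2. rewrite sumr_ind by lia. rewrite Z2Nat.id by lia. reflexivity.
Qed.

Ltac zcases := repeat match goal with
  | |- context [Z.eqb ?a ?b] => destruct (Z.eqb_spec a b)
  | |- context [Z.leb ?a ?b] => destruct (Z.leb_spec a b)
  end.

Lemma PT_back : forall l M x y,
  PT l (psw l y) (S M) x = (if Z.leb 0 y then wt l y * (PT l (psw l (y+1)) M x + PT l (psw l (y-1)) M x) else 0).
Proof.
  intros l M; induction M; intros x y.
  - simpl. unfold psw, ind, wt. zcases; try lia; try ring; subst; try lia; try ring.
  - change (PT l (psw l y) (S (S M)) x) with
      (if Z.leb 0 x then wt l x * (PT l (psw l y) (S M) (x+1) + PT l (psw l y) (S M) (x-1)) else 0).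
    rewrite (IHM (x+1)%Z y), (IHM (x-1)%Z y). cbn [PT].
    destruct (Z.leb 0 x); destruct (Z.leb 0 y); ring.
Qed.

Lemma PT_sym : forall l M x y, PT l (psw l y) M x = PT l (psw l x) M y.
Proof.
  intros l M; induction M; intros x y.
  - simpl. unfold psw, ind, wt. zcases; try lia; try ring; subst; try lia; try ring.
  - rewrite PT_back. cbn [PT]. rewrite (IHM x (y+1)%Z), (IHM x (y-1)%Z). reflexivity.
Qed.

Lemma PT_CK : forall l psi M1 M2 x y, 0 <= l -> (forall z, (0 <= z)%Z -> 0 <= psi z) ->
  PT l (ind y) M1 x * PT l psi M2 y <= PT l psi (M1 + M2) x.
Proof.
  intros l psi M1; induction M1; intros M2 x y Hl Hp.
  - simpl. unfold ind. zcases; subst; try lra; rewrite Rmult_0_l; apply PT_nonneg; auto.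
  - simpl. destruct (Z.leb 0 x); [|lra].
    pose proof (IHM1 M2 (x+1)%Z y Hl Hp). pose proof (IHM1 M2 (x-1)%Z y Hl Hp).
    pose proof (wt_nonneg l x Hl).
    replace (wt l x * (PT l (ind y) M1 (x + 1) + PT l (ind y) M1 (x - 1)) * PT l psi M2 y) with
      (wt l x * (PT l (ind y) M1 (x + 1) * PT l psi M2 y + PT l (ind y) M1 (x - 1) * PT l psi M2 y)) by ring.
    apply Rmult_le_compat_l; auto. lra.
Qed.

Lemma PT_decomp : forall l psi M x, psi 0%Z = 0 ->
  PT l psi M x = PT 0 psi M x + sumr (fun s => PT l (psw l 0) s x * PT 0 psi (M - 1 - s) 1) M.
Proof.
  intros l psi M; induction M; intros x H0.
  - simpl. ring.
  - destruct (Z.ltb_spec x 0).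
    + rewrite !PT_neg by lia. rewrite sumr_zero. ring. intros k _. rewrite PT_neg by lia. ring.
    + destruct (Z.eqb_spec x 0).
      * subst x. rewrite sumr_shift.
        replace (S M - 1 - 0)%nat with M by lia.
        rewrite (sumr_ext _ (fun s => l * (PT l (psw l 0) s 1 * PT 0 psi (M - 1 - s) 1))).
        2:{ intros k Hk. replace (S M - 1 - S k)%nat with (M - 1 - k)%nat by lia.
            simpl. rewrite (PT_neg l _ k (-1)) by lia. unfold wt. simpl. ring. }
        rewrite sumr_scal. simpl. rewrite (PT_neg l psi M (-1)) by lia.
        rewrite IHM by auto. rewrite (PT_neg 0 psi M (-1)) by lia. unfold psw, ind. unfold wt. simpl. ring.
      * rewrite sumr_shift. replace (S M - 1 - 0)%nat with M by lia.
        rewrite (sumr_ext _ (fun s => PT l (psw l 0) s (x+1) * PT 0 psi (M - 1 - s) 1 +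
                                      PT l (psw l 0) s (x-1) * PT 0 psi (M - 1 - s) 1)).
        2:{ intros k Hk. replace (S M - 1 - S k)%nat with (M - 1 - k)%nat by lia.
            simpl. destruct (Z.leb_spec 0 x); try lia. unfold wt. destruct (Z.eqb_spec x 0); try lia. ring. }
        rewrite sumr_add. simpl. destruct (Z.leb_spec 0 x); try lia.
        assert (E1 : wt l x = 1) by (unfold wt; destruct (Z.eqb_spec x 0); [lia|ring]).
        assert (E2 : wt 0 x = 1) by (unfold wt; destruct (Z.eqb_spec x 0); [lia|ring]).
        assert (E3 : psw l 0 x = 0) by (unfold psw, ind; destruct (Z.eqb_spec x 0); [lia|ring]).
        rewrite E1, E2, E3, (IHM (x+1)%Z), (IHM (x-1)%Z) by auto. ring.
Qed.

Lemma psw_nonneg : forall l y z, 0 <= l -> 0 <= psw l y z.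
Proof. intros. unfold psw, ind. pose proof (wt_nonneg l z H). destruct (Z.eqb z y); lra. Qed.
Lemma ind_nonneg : forall y z, 0 <= ind y z.
Proof. intros. unfold ind. destruct (Z.eqb z y); lra. Qed.

Lemma PT_mono_l : forall l1 l2 psi M x, 0 <= l1 <= l2 -> (forall z, (0 <= z)%Z -> 0 <= psi z) ->
  PT l1 psi M x <= PT l2 psi M x.
Proof.
  intros l1 l2 psi M; induction M; intros x Hl Hp; simpl; destruct (Z.leb 0 x); try lra.
  pose proof (IHM (x+1)%Z Hl Hp). pose proof (IHM (x-1)%Z Hl Hp).
  pose proof (PT_nonneg l1 psi M (x+1) (proj1 Hl) Hp). pose proof (PT_nonneg l1 psi M (x-1) (proj1 Hl) Hp).
  assert (wt l1 x <= wt l2 x) by (unfold wt; destruct (Z.eqb x 0); lra).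
  pose proof (wt_nonneg l1 x (proj1 Hl)).
  apply Rmult_le_compat; lra.
Qed.

Lemma psw_ind : forall l y M x, PT l (psw l y) M x = wt l y * PT l (ind y) M x.
Proof.
  intros. rewrite <- PT_scal. apply PT_ext_range. intros z _ _. unfold psw, ind.
  destruct (Z.eqb_spec z y); subst; ring.
Qed.

Lemma pigeon_PT : forall l psi c n x R, (0 <= x)%Z -> (x + Z.of_nat n < Z.of_nat R)%Z ->
  (forall z, (0 <= z)%Z -> wt l z * (psi (z+1)%Z + (if Z.eqb z 0 then 0 else psi (z-1)%Z)) = c * psi z) ->
  exists k, (k < R)%nat /\ c ^ n * psi x / INR R <= psi (Z.of_nat k) * PT l (ind (Z.of_nat k)) n x.
Proof.
  intros l psi c n x R Hx HR He.
  assert (E : PT l psi n x = c ^ n * psi x) by (apply PT_eigen; auto).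
  rewrite (PT_repr l psi n x R Hx HR) in E.
  apply pigeon. lia. lra.
Qed.

Lemma square_PT : forall l h k n, 0 <= l -> h <> 0%Z ->
  wt l k * (PT l (ind k) n h) ^ 2 <= PT l (psw l h) (n + n) h.
Proof.
  intros l h k n Hl Hh.
  eapply Rle_trans; [|apply (PT_CK l (psw l h) n n h k Hl)].
  2:{ intros; apply psw_nonneg; auto. }
  rewrite PT_sym, psw_ind. right. simpl. ring.
Qed.

Lemma UB : forall l h L N, 0 < l -> (1 <= h)%Z -> L <= 0 -> (l - 1) * exp (2 * L) <= 1 ->
  PT l (psw l h) N h <= 2 ^ N + INR N * l * (exp L + exp (- L)) ^ (N - 1) * exp ((2 * IZR h - 1) * L).
Proof.
  intros l h L N Hl Hh HL Hc.
  set (c := exp L + exp (- L)).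
  assert (Hc0 : 0 < c) by (unfold c; pose proof (exp_pos L); pose proof (exp_pos (-L)); lra).
  rewrite PT_decomp by (unfold psw, ind; destruct (Z.eqb_spec 0 h); [lia|ring]).
  apply Rplus_le_compat.
  - replace (2 ^ N) with (2 ^ N * 1) by ring.
    apply (PT_super 0 _ (fun _ : Z => 1) 2 N h); try lra; try lia.
    + intros z Hz. unfold psw, ind, wt. destruct (Z.eqb_spec z h); destruct (Z.eqb_spec z 0); subst; try lia; lra.
    + intros; lra.
    + intros z Hz. unfold wt. destruct (Z.eqb_spec z 0); lra.
  - replace (INR N * l * c ^ (N - 1) * exp ((2 * IZR h - 1) * L)) with
      (sumr (fun _ => l * c ^ (N - 1) * exp ((2 * IZR h - 1) * L)) N) by (rewrite sumr_const; ring).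
    apply sumr_le. intros s Hs.
    assert (B1 : PT l (psw l 0) s h <= c ^ s * (l * exp (IZR h * L))).
    { apply (PT_super l _ (fun z => l * exp (IZR z * L))); try lra; try lia.
      - intros z Hz. unfold psw, ind, wt. destruct (Z.eqb_spec z 0); subst.
        + simpl. rewrite Rmult_0_l, exp_0. lra.
        + pose proof (exp_pos (IZR z * L)). nra.
      - intros z Hz. pose proof (exp_pos (IZR z * L)). nra.
      - intros z Hz. unfold wt. destruct (Z.eqb_spec z 0).
        + subst. simpl. rewrite Rmult_0_l, exp_0, Rmult_1_l.
          unfold c. assert (E : exp (2 * L) = exp L * exp L) by (rewrite <- exp_plus; f_equal; ring).
          assert (E2 : exp (- L) * exp L = 1) by (rewrite <- exp_plus; replace (-L + L) with 0 by ring; apply exp_0).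
          pose proof (exp_pos L). pose proof (exp_pos (-L)).
          assert (l * exp L <= exp L + exp (-L)).
          { apply Rmult_le_reg_r with (exp L); auto. nra. }
          nra.
        + rewrite plus_IZR, minus_IZR. unfold c.
          replace ((IZR z + 1) * L) with (IZR z * L + L) by ring.
          replace ((IZR z - 1) * L) with (IZR z * L + - L) by ring.
          rewrite !exp_plus. right. ring. }
    assert (B2 : PT 0 (psw l h) (N - 1 - s) 1 <= c ^ (N - 1 - s) * exp ((IZR h - 1) * L)).
    { replace ((IZR h - 1) * L) with ((IZR h - IZR 1) * L) by (simpl; ring).
      apply (PT_super 0 _ (fun z => exp ((IZR h - IZR z) * L))); try lra; try lia.
      - intros z Hz. unfold psw, ind, wt. pose proof (exp_pos ((IZR h - IZR z) * L)).
        destruct (Z.eqb_spec z h); destruct (Z.eqb_spec z 0); try lia; try lra.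
        rewrite e. replace (IZR h - IZR h) with 0 by ring. rewrite Rmult_0_l, exp_0. lra.
      - intros z Hz. pose proof (exp_pos ((IZR h - IZR z) * L)). lra.
      - intros z Hz. unfold wt. destruct (Z.eqb_spec z 0).
        + pose proof (exp_pos ((IZR h - IZR z) * L)). nra.
        + rewrite plus_IZR, minus_IZR. unfold c.
          replace ((IZR h - (IZR z + 1)) * L) with ((IZR h - IZR z) * L + - L) by ring.
          replace ((IZR h - (IZR z - 1)) * L) with ((IZR h - IZR z) * L + L) by ring.
          rewrite !exp_plus. right. ring. }
    pose proof (PT_nonneg l (psw l 0) s h (Rlt_le _ _ Hl) (fun z _ => psw_nonneg l 0 z (Rlt_le _ _ Hl))).
    pose proof (PT_nonneg 0 (psw l h) (N - 1 - s) 1 (Rle_refl 0) (fun z _ => psw_nonneg l h z (Rlt_le _ _ Hl))).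
    eapply Rle_trans. apply Rmult_le_compat; eauto.
    assert (Ep : c ^ s * c ^ (N - 1 - s) = c ^ (N - 1)) by (rewrite <- pow_add; f_equal; lia).
    rewrite <- Ep.
    replace ((2 * IZR h - 1) * L) with (IZR h * L + (IZR h - 1) * L) by ring. rewrite exp_plus.
    right. ring.
Qed.

Lemma exp_le_mono : forall x y, x <= y -> exp x <= exp y.
Proof. intros x y H. destruct H. left; apply exp_increasing; auto. subst; lra. Qed.

Lemma LB0 : forall l h n, 0 <= l -> (1 <= h)%Z ->
  (2 ^ n / ((IZR h + INR n + 1) * (IZR h + INR n + 1))) ^ 2 <= PT l (psw l h) (n + n) h.
Proof.
  intros l h n Hl Hh.
  set (R := (Z.to_nat h + n + 1)%nat).
  assert (HR : INR R = IZR h + INR n + 1).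
  { unfold R. rewrite !plus_INR, INR_IZR_INZ, Z2Nat.id by lia. simpl. ring. }
  assert (Hh' : 1 <= IZR h) by (apply IZR_le; lia).
  assert (Hn : 0 <= INR n) by apply pos_INR.
  destruct (pigeon_PT 0 IZR 2 n h R ltac:(lia) ltac:(unfold R; lia)) as [k [Hk Hp]].
  { intros z Hz. unfold wt. destruct (Z.eqb_spec z 0).
    - subst. simpl. ring.
    - rewrite plus_IZR, minus_IZR. ring. }
  rewrite HR in Hp.
  set (Q := PT 0 (ind (Z.of_nat k)) n h) in *.
  assert (HQ : 0 <= Q) by (apply PT_nonneg; [lra| intros; apply ind_nonneg]).
  assert (Hpos : 0 < 2 ^ n * IZR h / (IZR h + INR n + 1)).
  { apply Rdiv_lt_0_compat; [apply Rmult_lt_0_compat; [apply pow_lt|]|]; lra. }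
  assert (Hk0 : (0 < Z.of_nat k)%Z).
  { destruct (Z.eqb_spec (Z.of_nat k) 0). rewrite e in Hp. simpl in Hp. lra. lia. }
  assert (Hk1 : 1 <= IZR (Z.of_nat k)) by (apply IZR_le; lia).
  assert (Hk2 : IZR (Z.of_nat k) <= IZR h + INR n + 1).
  { rewrite <- INR_IZR_INZ, <- HR. apply lt_INR in Hk. lra. }
  assert (HQb : 2 ^ n / ((IZR h + INR n + 1) * (IZR h + INR n + 1)) <= Q).
  { assert (H2 : 0 < 2 ^ n) by (apply pow_lt; lra).
    apply Rmult_le_reg_l with (IZR (Z.of_nat k)); [lra|].
    eapply Rle_trans; [|apply Hp].
    unfold Rdiv. rewrite Rinv_mult.
    set (A := / (IZR h + INR n + 1)).
    assert (0 < A) by (apply Rinv_0_lt_compat; lra).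
    assert (HA : A * (IZR h + INR n + 1) = 1) by (unfold A; field; lra).
    assert (HkA : IZR (Z.of_nat k) * A <= 1) by (rewrite <- HA, (Rmult_comm A); apply Rmult_le_compat_r; lra).
    set (P := 2 ^ n * A). assert (0 <= P) by (unfold P; nra).
    replace (IZR (Z.of_nat k) * (2 ^ n * (A * A))) with ((IZR (Z.of_nat k) * A) * P) by (unfold P; ring).
    replace (2 ^ n * IZR h * A) with (IZR h * P) by (unfold P; ring).
    nra. }
  assert (Hw : wt 0 (Z.of_nat k) = 1) by (unfold wt; destruct (Z.eqb_spec (Z.of_nat k) 0); [lia|ring]).
  pose proof (square_PT 0 h (Z.of_nat k) n (Rle_refl 0) ltac:(lia)) as Hsq.
  fold Q in Hsq. rewrite Hw in Hsq.
  assert (Hm : PT 0 (psw 0 h) (n + n) h <= PT l (psw l h) (n + n) h).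
  { rewrite (PT_ext_range 0 (psw 0 h) (psw l h)).
    apply PT_mono_l; [lra| intros; apply psw_nonneg; auto].
    intros z _ _. unfold psw, ind, wt. destruct (Z.eqb_spec z h); destruct (Z.eqb_spec z 0); try ring. lia. }
  assert (0 <= 2 ^ n / ((IZR h + INR n + 1) * (IZR h + INR n + 1))).
  { apply Rlt_le, Rdiv_lt_0_compat; [apply pow_lt|apply Rmult_lt_0_compat]; lra. }
  eapply Rle_trans; [|apply Hm]. eapply Rle_trans; [|apply Hsq].
  rewrite Rmult_1_l. apply pow_incr. lra.
Qed.

Lemma LB1 : forall l h n L, 1 < l -> (1 <= h)%Z -> L <= 0 -> (l - 1) * exp (2 * L) = 1 ->
  ((exp L + exp (- L)) ^ n * exp (IZR h * L) / (IZR h + INR n + 1)) ^ 2 <= PT l (psw l h) (n + n) h.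
Proof.
  intros l h n L Hl Hh HL He.
  set (c := exp L + exp (- L)).
  set (R := (Z.to_nat h + n + 1)%nat).
  assert (HR : INR R = IZR h + INR n + 1).
  { unfold R. rewrite !plus_INR, INR_IZR_INZ, Z2Nat.id by lia. simpl. ring. }
  assert (Hh' : 1 <= IZR h) by (apply IZR_le; lia).
  assert (Hn : 0 <= INR n) by apply pos_INR.
  destruct (pigeon_PT l (fun z => exp (IZR z * L)) c n h R ltac:(lia) ltac:(unfold R; lia)) as [k [Hk Hp]].
  { intros z Hz. unfold wt. destruct (Z.eqb_spec z 0).
    - subst. simpl. rewrite Rmult_0_l, exp_0, Rmult_1_l, Rmult_1_r. unfold c.
      assert (E : exp (2 * L) = exp L * exp L) by (rewrite <- exp_plus; f_equal; ring).
      assert (E2 : exp (- L) * exp L = 1) by (rewrite <- exp_plus; replace (-L + L) with 0 by ring; apply exp_0).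
      pose proof (exp_pos L). pose proof (exp_pos (-L)).
      apply Rmult_eq_reg_r with (exp L); [|lra]. nra.
    - rewrite plus_IZR, minus_IZR. unfold c.
      replace ((IZR z + 1) * L) with (IZR z * L + L) by ring.
      replace ((IZR z - 1) * L) with (IZR z * L + - L) by ring.
      rewrite !exp_plus. ring. }
  rewrite HR in Hp.
  set (Q := PT l (ind (Z.of_nat k)) n h) in *.
  assert (HQ : 0 <= Q) by (apply PT_nonneg; [lra| intros; apply ind_nonneg]).
  assert (Hc : 0 < c) by (unfold c; pose proof (exp_pos L); pose proof (exp_pos (-L)); lra).
  assert (Hpos : 0 < c ^ n * exp (IZR h * L) / (IZR h + INR n + 1)).
  { apply Rdiv_lt_0_compat; [apply Rmult_lt_0_compat; [apply pow_lt|apply exp_pos]|]; lra. }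
  assert (Hek : exp (IZR (Z.of_nat k) * L) <= 1).
  { rewrite <- exp_0. apply exp_le_mono. pose proof (pos_INR k). rewrite INR_IZR_INZ in H. nra. }
  assert (Hek0 : 0 < exp (IZR (Z.of_nat k) * L)) by apply exp_pos.
  assert (HQb : c ^ n * exp (IZR h * L) / (IZR h + INR n + 1) <= Q) by nra.
  assert (Hw : 1 <= wt l (Z.of_nat k)) by (unfold wt; destruct (Z.eqb (Z.of_nat k) 0); lra).
  pose proof (square_PT l h (Z.of_nat k) n ltac:(lra) ltac:(lia)) as Hsq.
  fold Q in Hsq.
  eapply Rle_trans; [|apply Hsq].
  eapply Rle_trans; [apply pow_incr; split; [lra|apply HQb]|]. nra.
Qed.

Lemma ec_bounds : forall s, s <= IZR (even_ceil s) <= s + 2.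
Proof.
  intros s. unfold even_ceil. destruct (archimed (- (s / 2))) as [H1 H2].
  rewrite mult_IZR, minus_IZR. simpl. lra.
Qed.

Lemma pow_exp : forall x n, 0 < x -> x ^ n = exp (INR n * ln x).
Proof. intros. rewrite <- Rpower_pow by auto. reflexivity. Qed.

Lemma ln_lt_sqrt : forall y, 0 < y -> ln y < 2 * sqrt y.
Proof.
  intros y Hy. pose proof (sqrt_lt_R0 y Hy).
  assert (E : ln y = 2 * ln (sqrt y)).
  { rewrite <- (sqrt_sqrt y) at 1 by lra. rewrite ln_mult by auto. ring. }
  rewrite E. pose proof (exp_ineq1_le (ln (sqrt y))). rewrite exp_ln in H0 by auto. lra.
Qed.

Lemma err_lim : forall C, 0 <= C -> forall eps, 0 < eps -> exists N0 : nat, forall n : nat, (N0 <= n)%nat ->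
  ln (1 + C * INR n) / INR n < eps.
Proof.
  intros C HC eps He.
  destruct (archimed (4 * (1 + C) / (eps * eps))) as [H1 _].
  exists (S (Z.to_nat (up (4 * (1 + C) / (eps * eps))))). intros n Hn.
  assert (Hn1 : 1 <= INR n) by (apply (le_INR 1); lia).
  assert (Hbig : 4 * (1 + C) / (eps * eps) < INR n).
  { apply le_INR in Hn. rewrite S_INR, INR_IZR_INZ in Hn.
    destruct (Z.le_gt_cases 0 (up (4 * (1 + C) / (eps * eps)))).
    - rewrite Z2Nat.id in Hn by auto. lra.
    - assert (0 < 4 * (1 + C) / (eps * eps)) by (apply Rdiv_lt_0_compat; nra).
      assert (IZR (up (4 * (1 + C) / (eps * eps))) > 0) by lra. apply lt_IZR in H2. lia. }
  assert (Hy : 0 < 1 + C * INR n) by nra.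
  pose proof (ln_lt_sqrt _ Hy).
  assert (Hs : sqrt (1 + C * INR n) <= sqrt (1 + C) * sqrt (INR n)).
  { rewrite <- sqrt_mult by lra. apply sqrt_le_1_alt. nra. }
  assert (Hsn : 0 < sqrt (INR n)) by (apply sqrt_lt_R0; lra).
  assert (Hsn2 : sqrt (INR n) * sqrt (INR n) = INR n) by (apply sqrt_sqrt; lra).
  assert (Hsc : sqrt (1 + C) * sqrt (1 + C) = 1 + C) by (apply sqrt_sqrt; lra).
  assert (Hsc0 : 0 < sqrt (1 + C)) by (apply sqrt_lt_R0; lra).
  apply Rmult_lt_reg_r with (INR n); [lra|]. unfold Rdiv. rewrite Rmult_assoc, Rinv_l, Rmult_1_r by lra.
  (* ln(..) < 2 sqrt(1+C) sqrt n <= eps * n *)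
  assert (Hk : 2 * sqrt (1 + C) < eps * sqrt (INR n)).
  { assert (Hq : 4 * (1 + C) < eps * eps * INR n).
    { apply Rmult_lt_compat_l with (r := eps * eps) in Hbig; [|nra].
      unfold Rdiv in Hbig. rewrite <- Rmult_assoc in Hbig. field_simplify in Hbig; [lra|nra]. }
    apply Rsqr_incrst_0; unfold Rsqr; try nra. }
  nra.
Qed.

Definition useq (l a : R) (n : nat) : R := ln (Zpart l a (2 * n)) / INR (2 * n) - ln 2.

Lemma hN_facts : forall a n, 0 < a < 1/2 -> (1 <= n)%nat ->
  let h := even_ceil (a * INR (2 * n)) in
  (1 <= h)%Z /\ 2 * a * INR n <= IZR h <= 2 * a * INR n + 2.
Proof.
  intros a n Ha Hn h. pose proof (ec_bounds (a * INR (2 * n))) as [H1 H2]. fold h in H1, H2.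
  rewrite mult_INR in H1, H2. simpl (INR 2) in H1, H2.
  assert (1 <= INR n) by (apply (le_INR 1); auto).
  split; [|lra]. apply le_IZR. simpl. 
  assert (0 < IZR h) by nra.
  assert (0 < h)%Z by (apply lt_IZR; auto). apply IZR_le. lia.
Qed.

Lemma Z_pos : forall l a n, 0 <= l -> 0 < a < 1/2 -> (1 <= n)%nat -> 0 < Zpart l a (2 * n).
Proof.
  intros l a n Hl Ha Hn. destruct (hN_facts a n Ha Hn) as [Hh _].
  rewrite Zpart_PT. set (h := even_ceil (a * INR (2 * n))) in *. replace (2 * n)%nat with (n + n)%nat by lia.
  eapply Rlt_le_trans; [|apply LB0; auto].
  apply pow_lt. apply Rdiv_lt_0_compat. apply pow_lt; lra.
  assert (1 <= IZR h) by (apply IZR_le; auto).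
  pose proof (pos_INR n). apply Rmult_lt_0_compat; lra.
Qed.

Lemma U_gen : forall l a L, 0 < l -> 0 < a < 1/2 -> L <= 0 -> (l - 1) * exp (2 * L) <= 1 ->
  exists K, 0 <= K /\ forall n, (1 <= n)%nat ->
  useq l a n <= Rmax 0 (ln ((exp L + exp (- L)) / 2) + 2 * a * L) + ln (1 + K * INR n) / INR n.
Proof.
  intros l a L Hl Ha HL Hadm.
  set (c := exp L + exp (- L)).
  assert (Hc : 0 < c) by (unfold c; pose proof (exp_pos L); pose proof (exp_pos (-L)); lra).
  set (g := Rmax 0 (ln (c / 2) + 2 * a * L)).
  set (K0 := l / (c * exp L)).
  assert (HK0 : 0 < K0) by (unfold K0; apply Rdiv_lt_0_compat; auto; apply Rmult_lt_0_compat; auto; apply exp_pos).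
  exists (2 * K0). split; [lra|]. intros n Hn.
  destruct (hN_facts a n Ha Hn) as [Hh [Hh1 Hh2]].
  set (h := even_ceil (a * INR (2 * n))) in *.
  set (N := (2 * n)%nat).
  assert (HN : INR N = 2 * INR n) by (unfold N; rewrite mult_INR; simpl; ring).
  assert (Hn1 : 1 <= INR n) by (apply (le_INR 1); auto).
  pose proof (Z_pos l a n (Rlt_le _ _ Hl) Ha Hn) as HZ.
  unfold useq. fold N. fold N in HZ.
  assert (HZe : Zpart l a N = PT l (psw l h) N h) by (unfold h, N; apply Zpart_PT).
  pose proof (UB l h L N Hl Hh HL Hadm) as HU. fold c in HU. rewrite <- HZe in HU.
  set (E := exp (INR N * g)).
  assert (Hg : 0 <= g) by (unfold g; apply Rmax_l).
  assert (HE : 1 <= E) by (unfold E; rewrite <- exp_0; apply exp_le_mono; nra).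
  assert (H2N : 0 < 2 ^ N) by (apply pow_lt; lra).
  assert (HT2 : INR N * l * c ^ (N - 1) * exp ((2 * IZR h - 1) * L) <= INR N * K0 * (2 ^ N * E)).
  { assert (Ec : c ^ N = c * c ^ (N - 1)) by (unfold N; replace (2 * n)%nat with (S (2 * n - 1)) at 1 by lia; simpl; f_equal).
    assert (Ee : exp ((2 * IZR h - 1) * L) = exp (2 * IZR h * L) * exp (- L)) by (rewrite <- exp_plus; f_equal; ring).
    assert (Ee2 : exp (- L) * exp L = 1) by (rewrite <- exp_plus; replace (-L + L) with 0 by ring; apply exp_0).
    assert (Hb : exp (2 * IZR h * L) <= exp (INR N * (2 * a * L))) by (apply exp_le_mono; rewrite HN; nra).
    assert (Hb2 : c ^ N * exp (INR N * (2 * a * L)) <= 2 ^ N * E).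
    { rewrite !pow_exp by lra. rewrite <- !exp_plus. unfold E. rewrite <- exp_plus. apply exp_le_mono.
      assert (ln (c / 2) + 2 * a * L <= g) by (unfold g; apply Rmax_r).
      rewrite ln_div in H by lra. pose proof (pos_INR N). nra. }
    unfold K0. rewrite Ee.
    assert (0 < exp L) by apply exp_pos. assert (0 < exp (-L)) by apply exp_pos.
    assert (0 < c ^ (N - 1)) by (apply pow_lt; auto).
    pose proof (exp_pos (2 * IZR h * L)). pose proof (pos_INR N).
    apply Rle_trans with (INR N * (l / (c * exp L)) * (c ^ N * exp (INR N * (2 * a * L)))).
    - rewrite Ec. unfold Rdiv. rewrite Rinv_mult.
      replace (INR N * l * c ^ (N - 1) * (exp (2 * IZR h * L) * exp (- L))) with
        (INR N * l * (/ c * / exp L) * (c * c ^ (N - 1) * exp (2 * IZR h * L))) by (rewrite exp_Ropp; field; split; lra).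
      replace (INR N * (l * (/ c * / exp L)) * (c * c ^ (N - 1) * exp (INR N * (2 * a * L)))) with
        (INR N * l * (/ c * / exp L) * (c * c ^ (N - 1) * exp (INR N * (2 * a * L)))) by ring.
      assert (0 <= INR N * l * (/ c * / exp L)).
      { apply Rmult_le_pos. apply Rmult_le_pos; lra.
        apply Rmult_le_pos; left; apply Rinv_0_lt_compat; auto. }
      apply Rmult_le_compat_l; auto. apply Rmult_le_compat_l; auto. nra.
    - apply Rmult_le_compat_l; auto. apply Rmult_le_pos; auto. left; apply Rdiv_lt_0_compat; auto. apply Rmult_lt_0_compat; auto. }
  assert (Hfin : Zpart l a N <= 2 ^ N * E * (1 + INR N * K0)) by nra.
  assert (HNpos : 0 < INR N) by lra.
  assert (Hl1 : 0 < 1 + INR N * K0) by nra.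
  assert (Hln : ln (Zpart l a N) <= INR N * ln 2 + INR N * g + ln (1 + INR N * K0)).
  { eapply Rle_trans. apply ln_le; eauto.
    rewrite !ln_mult by (try apply Rmult_lt_0_compat; try lra; unfold E; apply exp_pos).
    unfold E. rewrite ln_exp. rewrite <- Rpower_pow by lra. unfold Rpower. rewrite ln_exp. lra. }
  assert (Hlnpos : 0 <= ln (1 + INR N * K0)) by (rewrite <- ln_1; apply ln_le; [lra|]; assert (0 <= INR N * K0) by (apply Rmult_le_pos; lra); lra).
  assert (Hmon : ln (1 + INR N * K0) / INR N <= ln (1 + 2 * K0 * INR n) / INR n).
  { replace (1 + 2 * K0 * INR n) with (1 + INR N * K0) by (rewrite HN; ring).
    set (X := ln (1 + INR N * K0)) in *.
    rewrite HN. unfold Rdiv. rewrite Rinv_mult.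
    assert (0 < / INR n) by (apply Rinv_0_lt_compat; lra).
    assert (/ 2 * / INR n <= / INR n) by lra. apply Rmult_le_compat_l; auto. }
  assert (ln (Zpart l a N) / INR N <= ln 2 + g + ln (1 + INR N * K0) / INR N).
  { apply Rmult_le_reg_r with (INR N); auto. unfold Rdiv. rewrite !Rmult_plus_distr_r, !Rmult_assoc, Rinv_l by lra. lra. }
  lra.
Qed.

Lemma exp_half_ln : forall x, 0 < x -> exp (ln x / 2) = sqrt x.
Proof.
  intros x Hx. pose proof (sqrt_lt_R0 x Hx).
  replace (ln x) with (2 * ln (sqrt x)).
  - replace (2 * ln (sqrt x) / 2) with (ln (sqrt x)) by field. apply exp_ln; auto.
  - rewrite <- (sqrt_sqrt x) at 2 by lra. rewrite ln_mult by auto. ring.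
Qed.

Lemma ylny : forall y, 0 < y -> y - 1 <= y * ln y.
Proof.
  intros y Hy. pose proof (exp_ineq1_le (- ln y)). rewrite exp_Ropp, exp_ln in H by auto.
  apply Rmult_le_compat_l with (r := y) in H; [|lra]. rewrite Rinv_r in H by lra. nra.
Qed.

Lemma fpin_gt2 : forall l, 2 < l -> fpin l = ln l - ln 2 - ln (l - 1) / 2.
Proof.
  intros l Hl. unfold fpin. destruct (Rlt_dec 2 l); [|lra].
  assert (Hs : 0 < sqrt (l - 1)) by (apply sqrt_lt_R0; lra).
  rewrite ln_div, ln_mult by lra.
  rewrite <- (exp_half_ln (l-1)) by lra. rewrite ln_exp. ring.
Qed.

Lemma fpin_le2 : forall l, l <= 2 -> fpin l = 0.
Proof. intros l Hl. unfold fpin. destruct (Rlt_dec 2 l); [lra|auto]. Qed.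

Definition Phi (l a : R) : R := if Rlt_dec 2 l then Rmax 0 (fpin l - a * ln (l - 1)) else 0.

Lemma Ll_facts : forall l a, 2 < l ->
  let L := - (ln (l - 1) / 2) in
  L <= 0 /\ (l - 1) * exp (2 * L) = 1 /\
  ln ((exp L + exp (- L)) / 2) + 2 * a * L = fpin l - a * ln (l - 1).
Proof.
  intros l a Hl L.
  assert (Hln : 0 < ln (l - 1)) by (rewrite <- ln_1; apply ln_increasing; lra).
  assert (Hs : 0 < sqrt (l - 1)) by (apply sqrt_lt_R0; lra).
  assert (Hss : sqrt (l - 1) * sqrt (l - 1) = l - 1) by (apply sqrt_sqrt; lra).
  assert (E1 : exp (- L) = sqrt (l - 1)) by (replace (- L) with (ln (l - 1) / 2) by (unfold L; ring); apply exp_half_ln; lra).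
  assert (E2 : exp L = / sqrt (l - 1)) by (rewrite <- E1, exp_Ropp, Rinv_inv; reflexivity).
  split; [unfold L; lra|]. split.
  - replace (2 * L) with (L + L) by ring. rewrite exp_plus, E2. replace (l - 1) with (sqrt (l - 1) * sqrt (l - 1)) at 1 by auto. field. lra.
  - rewrite E1, E2, fpin_gt2 by lra.
    replace ((/ sqrt (l - 1) + sqrt (l - 1)) / 2) with ((1 + sqrt (l - 1) * sqrt (l - 1)) / (2 * sqrt (l - 1))) by (field; lra).
    rewrite Hss. replace (1 + (l - 1)) with l by ring.
    rewrite ln_div, ln_mult by lra. rewrite <- (exp_half_ln (l-1)) at 1 by lra. rewrite ln_exp. unfold L. field.
Qed.

Lemma La_facts : forall l a, l <= 2 -> 0 < a < 1/2 ->
  let L := (ln (1 - 2 * a) - ln (1 + 2 * a)) / 2 in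
  L <= 0 /\ (l - 1) * exp (2 * L) <= 1 /\ ln ((exp L + exp (- L)) / 2) + 2 * a * L <= 0.
Proof.
  intros l a Hl Ha L. subst L.
  set (p := 1 + 2 * a). set (m := 1 - 2 * a). set (L := (ln m - ln p) / 2).
  assert (Hp : 0 < p) by (unfold p; lra). assert (Hm : 0 < m) by (unfold m; lra).
  assert (Hlm : ln m < ln p) by (apply ln_increasing; unfold m, p; lra).
  assert (E2 : exp (2 * L) = m / p).
  { unfold L. replace (2 * ((ln m - ln p) / 2)) with (ln m - ln p) by field.
    rewrite <- ln_div by auto. apply exp_ln. apply Rdiv_lt_0_compat; auto. }
  assert (Hmp : m / p < 1) by (apply Rlt_div_l; auto; unfold m, p; lra).
  assert (Hmp0 : 0 < m / p) by (apply Rdiv_lt_0_compat; auto).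
  split; [unfold L; lra|]. split.
  - rewrite E2. destruct (Rle_dec 0 (l - 1)); nra.
  - assert (Eu : (exp L + exp (- L)) / 2 = / (p * exp L)).
    { rewrite exp_Ropp. assert (0 < exp L) by apply exp_pos.
      assert (exp L * exp L = m / p) by (rewrite <- exp_plus; rewrite <- E2; f_equal; ring).
      apply Rmult_eq_reg_r with (2 * p * exp L); [|nra].
      field_simplify; try lra. unfold Rdiv in H0. 
      replace (exp L ^ 2) with (exp L * exp L) by ring. rewrite H0. unfold m, p. field. lra. }
    rewrite Eu, ln_Rinv, ln_mult, ln_exp by (try apply Rmult_lt_0_compat; auto; apply exp_pos).
    unfold L.
    pose proof (ylny p Hp). pose proof (ylny m Hm).
    replace (- (ln p + (ln m - ln p) / 2) + 2 * a * ((ln m - ln p) / 2)) with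
      (- (p * ln p + m * ln m) / 2) by (unfold m, p; field).
    unfold m, p in *. lra.
Qed.

Lemma useq_Z : forall l a n, (1 <= n)%nat -> useq l a n = ln (PT l (psw l (even_ceil (a * INR (2 * n)))) (n + n) (even_ceil (a * INR (2 * n)))) / (2 * INR n) - ln 2.
Proof.
  intros. unfold useq. rewrite Zpart_PT. rewrite mult_INR. simpl (INR 2).
  set (h := even_ceil (a * INR (2 * n))). replace (2 * n)%nat with (n + n)%nat by lia. reflexivity.
Qed.

Lemma Lo0 : forall l a n, 0 <= l -> 0 < a < 1/2 -> (1 <= n)%nat ->
  - (2 * ln (1 + 5 * INR n) / INR n) <= useq l a n.
Proof.
  intros l a n Hl Ha Hn. rewrite useq_Z by auto.
  destruct (hN_facts a n Ha Hn) as [Hh [Hh1 Hh2]].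
  set (h := even_ceil (a * INR (2 * n))) in *.
  assert (Hn1 : 1 <= INR n) by (apply (le_INR 1); auto).
  pose proof (LB0 l h n Hl Hh) as HB.
  set (RR := IZR h + INR n + 1) in *.
  assert (HRR : 0 < RR) by (unfold RR; nra).
  assert (HRR2 : RR <= 1 + 5 * INR n) by (unfold RR; nra).
  set (Z := PT l (psw l h) (n + n) h) in *.
  assert (Hb : 0 < 2 ^ n / (RR * RR)) by (apply Rdiv_lt_0_compat; [apply pow_lt; lra|nra]).
  assert (HZ : 0 < Z) by (eapply Rlt_le_trans; [|apply HB]; apply pow_lt; auto).
  assert (Hln : 2 * (INR n * ln 2 - 2 * ln RR) <= ln Z).
  { eapply Rle_trans; [|apply ln_le; [apply pow_lt; auto|apply HB]].
    rewrite <- Rpower_pow by auto. unfold Rpower. rewrite ln_exp. simpl (INR 2).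
    rewrite ln_div, ln_mult by (try apply pow_lt; nra). rewrite <- Rpower_pow by lra. unfold Rpower. rewrite ln_exp. lra. auto. }
  assert (HlnR : ln RR <= ln (1 + 5 * INR n)) by (apply ln_le; auto).
  assert (- (2 * ln (1 + 5 * INR n) / INR n) <= - (2 * ln RR / INR n)).
  { apply Ropp_le_contravar. unfold Rdiv. apply Rmult_le_compat_r. left; apply Rinv_0_lt_compat; lra. lra. }
  eapply Rle_trans; [apply H|].
  assert (E : - (2 * ln RR / INR n) = (2 * (INR n * ln 2 - 2 * ln RR)) / (2 * INR n) - ln 2) by (field; lra).
  rewrite E. unfold Rminus at 2 3. apply Rplus_le_compat_r. unfold Rdiv. apply Rmult_le_compat_r; [left; apply Rinv_0_lt_compat; lra|auto].
Qed.

Lemma Lo1 : forall l a n, 2 < l -> 0 < a < 1/2 -> (1 <= n)%nat ->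
  (fpin l - a * ln (l - 1)) + 2 * (- (ln (l - 1) / 2)) / INR n - ln (1 + 5 * INR n) / INR n <= useq l a n.
Proof.
  intros l a n Hl Ha Hn. rewrite useq_Z by auto.
  destruct (hN_facts a n Ha Hn) as [Hh [Hh1 Hh2]].
  set (h := even_ceil (a * INR (2 * n))) in *.
  assert (Hn1 : 1 <= INR n) by (apply (le_INR 1); auto).
  destruct (Ll_facts l a Hl) as [HL [Hadm Hval]].
  set (L := - (ln (l - 1) / 2)) in *.
  pose proof (LB1 l h n L ltac:(lra) Hh HL Hadm) as HB.
  set (c := exp L + exp (- L)) in *.
  assert (Hc : 0 < c) by (unfold c; pose proof (exp_pos L); pose proof (exp_pos (-L)); lra).
  set (RR := IZR h + INR n + 1) in *.
  assert (HRR : 0 < RR) by (unfold RR; nra).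
  assert (HRR2 : RR <= 1 + 5 * INR n) by (unfold RR; nra).
  set (Z := PT l (psw l h) (n + n) h) in *.
  assert (Hb : 0 < c ^ n * exp (IZR h * L) / RR) by (apply Rdiv_lt_0_compat; [apply Rmult_lt_0_compat; [apply pow_lt; lra|apply exp_pos]|lra]).
  assert (HZ : 0 < Z) by (eapply Rlt_le_trans; [|apply HB]; apply pow_lt; auto).
  assert (Hcn : 0 < c ^ n) by (apply pow_lt; auto). pose proof (exp_pos (IZR h * L)).
  assert (Hln : 2 * (INR n * ln c + IZR h * L - ln RR) <= ln Z).
  { eapply Rle_trans; [|apply ln_le; [apply pow_lt; auto|apply HB]].
    rewrite <- Rpower_pow by auto. unfold Rpower. rewrite ln_exp. simpl (INR 2).
    rewrite ln_div, ln_mult by (try apply pow_lt; try apply exp_pos; nra). rewrite ln_exp.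
    rewrite <- Rpower_pow by lra. unfold Rpower. rewrite ln_exp. lra. auto. }
  assert (HlnR : ln RR <= ln (1 + 5 * INR n)) by (apply ln_le; auto).
  assert (HhL : (2 * a * INR n + 2) * L <= IZR h * L) by nra.
  rewrite ln_div in Hval by lra.
  apply Rle_trans with ((2 * (INR n * ln c + IZR h * L - ln RR)) / (2 * INR n) - ln 2).
  - replace ((2 * (INR n * ln c + IZR h * L - ln RR)) / (2 * INR n) - ln 2) with
      (ln c - ln 2 + (IZR h * L) / INR n - ln RR / INR n) by (field; lra).
    rewrite <- Hval.
    assert (2 * a * L + 2 * L / INR n <= IZR h * L / INR n).
    { apply Rmult_le_reg_r with (INR n); [lra|]. unfold Rdiv.
      rewrite Rmult_plus_distr_r, !Rmult_assoc, Rinv_l by lra. lra. }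
    assert (ln RR / INR n <= ln (1 + 5 * INR n) / INR n).
    { unfold Rdiv. apply Rmult_le_compat_r; auto. left; apply Rinv_0_lt_compat; lra. }
    lra.
  - unfold Rminus at 1 3. apply Rplus_le_compat_r. unfold Rdiv. apply Rmult_le_compat_r; [left; apply Rinv_0_lt_compat; lra|auto].
Qed.

Lemma err_inv : forall D, 0 <= D -> forall eps, 0 < eps -> exists N0 : nat, forall n : nat, (N0 <= n)%nat ->
  D / INR n < eps.
Proof.
  intros D HD eps He. destruct (archimed (D / eps)) as [H1 _].
  exists (S (Z.to_nat (up (D / eps)))). intros n Hn.
  assert (Hb : D / eps < INR n).
  { apply le_INR in Hn. rewrite S_INR, INR_IZR_INZ in Hn.
    destruct (Z.le_gt_cases 0 (up (D / eps))).
    - rewrite Z2Nat.id in Hn by auto. lra.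
    - assert (0 <= D / eps) by (apply Rmult_le_pos; [lra|left; apply Rinv_0_lt_compat; lra]).
      assert (IZR (up (D / eps)) < 0) by (apply IZR_lt; lia). lra. }
  assert (0 < INR n) by (assert (0 <= D / eps) by (apply Rmult_le_pos; [lra|left; apply Rinv_0_lt_compat; lra]); lra).
  apply Rmult_lt_reg_r with (INR n); auto. unfold Rdiv. rewrite Rmult_assoc, Rinv_l, Rmult_1_r by lra.
  apply Rmult_lt_reg_r with (/ eps). apply Rinv_0_lt_compat; auto.
  replace (eps * INR n * / eps) with (INR n) by (field; lra). auto.
Qed.

Lemma Upper_Phi : forall l a, 0 < l -> 0 < a < 1/2 ->
  exists K, 0 <= K /\ forall n, (1 <= n)%nat -> useq l a n <= Phi l a + ln (1 + K * INR n) / INR n.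
Proof.
  intros l a Hl Ha. unfold Phi. destruct (Rlt_dec 2 l).
  - destruct (Ll_facts l a r) as [HL [Hadm Hval]].
    destruct (U_gen l a _ Hl Ha HL (Req_le _ _ Hadm)) as [K [HK HU]].
    exists K. split; auto. intros n Hn. rewrite <- Hval. apply HU; auto.
  - destruct (La_facts l a (Rnot_lt_le _ _ n) Ha) as [HL [Hadm Hval]].
    destruct (U_gen l a _ Hl Ha HL Hadm) as [K [HK HU]].
    exists K. split; auto. intros m Hm. rewrite <- (Rmax_left 0 _ Hval) at 1. apply HU; auto.
Qed.

Lemma Lower_Phi : forall l a, 0 < l -> 0 < a < 1/2 -> exists D, 0 <= D /\
  forall n, (1 <= n)%nat -> Phi l a - (3 * ln (1 + 5 * INR n) / INR n + D / INR n) <= useq l a n.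
Proof.
  intros l a Hl Ha. unfold Phi. destruct (Rlt_dec 2 l).
  - exists (ln (l - 1)). split. rewrite <- ln_1; apply ln_le; lra.
    intros n Hn. pose proof (Lo0 l a n (Rlt_le _ _ Hl) Ha Hn). pose proof (Lo1 l a n r Ha Hn).
    assert (Hn1 : 1 <= INR n) by (apply (le_INR 1); auto).
    assert (0 <= ln (1 + 5 * INR n) / INR n).
    { apply Rmult_le_pos; [rewrite <- ln_1; apply ln_le; lra|left; apply Rinv_0_lt_compat; lra]. }
    assert (0 <= ln (l - 1) / INR n).
    { apply Rmult_le_pos; [rewrite <- ln_1; apply ln_le; lra|left; apply Rinv_0_lt_compat; lra]. }
    replace (2 * - (ln (l - 1) / 2) / INR n) with (- (ln (l - 1) / INR n)) in H0 by (field; lra).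
    replace (2 * ln (1 + 5 * INR n) / INR n) with (2 * (ln (1 + 5 * INR n) / INR n)) in H by (field; lra).
    replace (3 * ln (1 + 5 * INR n) / INR n) with (3 * (ln (1 + 5 * INR n) / INR n)) by (field; lra).
    unfold Rmax. destruct (Rle_dec 0 (fpin l - a * ln (l - 1))); lra.
  - exists 0. split; [lra|]. intros m Hm. pose proof (Lo0 l a m (Rlt_le _ _ Hl) Ha Hm).
    assert (Hn1 : 1 <= INR m) by (apply (le_INR 1); auto).
    assert (0 <= ln (1 + 5 * INR m) / INR m).
    { apply Rmult_le_pos; [rewrite <- ln_1; apply ln_le; lra|left; apply Rinv_0_lt_compat; lra]. }
    replace (2 * ln (1 + 5 * INR m) / INR m) with (2 * (ln (1 + 5 * INR m) / INR m)) in H by (field; lra).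
    replace (3 * ln (1 + 5 * INR m) / INR m) with (3 * (ln (1 + 5 * INR m) / INR m)) by (field; lra).
    replace (0 / INR m) with 0 by (field; lra). lra.
Qed.

Theorem lim_main : forall l a, 0 < l -> 0 < a < 1/2 -> is_lim_seq (useq l a) (Phi l a).
Proof.
  intros l a Hl Ha. apply is_lim_seq_spec. intros eps.
  destruct (Upper_Phi l a Hl Ha) as [K [HK HU]].
  destruct (Lower_Phi l a Hl Ha) as [D [HD HL]].
  pose proof (cond_pos eps) as He.
  destruct (err_lim K HK eps He) as [N1 H1].
  destruct (err_lim 5 ltac:(lra) (eps / 4) ltac:(lra)) as [N2 H2].
  destruct (err_inv D HD (eps / 4) ltac:(lra)) as [N3 H3].
  exists (S (N1 + N2 + N3)). intros n Hn.
  assert (Hn1 : (1 <= n)%nat) by lia.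
  specialize (HU n Hn1). specialize (HL n Hn1).
  specialize (H1 n ltac:(lia)). specialize (H2 n ltac:(lia)). specialize (H3 n ltac:(lia)).
  assert (HnR : 1 <= INR n) by (apply (le_INR 1); auto).
  assert (0 <= ln (1 + K * INR n) / INR n).
  { apply Rmult_le_pos; [rewrite <- ln_1; apply ln_le; [lra|nra]|left; apply Rinv_0_lt_compat; lra]. }
  replace (3 * ln (1 + 5 * INR n) / INR n) with (3 * (ln (1 + 5 * INR n) / INR n)) in HL by (field; lra).
  apply Rabs_def1; lra.
Qed.

Definition Ah (t : R) : R := (ln (1 + t) - ln (1 - t)) / 2.
Definition Bh (t : R) : R := - (ln (1 + t) + ln (1 - t)) / 2.

Lemma gibbs : forall u v, 0 <= u -> 0 < v -> u - v <= u * (ln u - ln v).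
Proof.
  intros u v Hu Hv. destruct Hu as [Hu|Hu]; [|subst; lra].
  pose proof (exp_ineq1_le (ln (v / u))). rewrite exp_ln in H by (apply Rdiv_lt_0_compat; auto).
  rewrite ln_div in H by auto.
  apply Rmult_le_compat_l with (r := u) in H; [|lra].
  replace (u * (v / u)) with v in H by (field; lra). nra.
Qed.

Lemma ylny_strict : forall y, 0 < y -> y <> 1 -> y - 1 < y * ln y.
Proof.
  intros y Hy H1. assert (ln y <> 0).
  { intros E. apply H1. rewrite <- (exp_ln y) by auto. rewrite E. apply exp_0. }
  pose proof (exp_ineq1 (- ln y) ltac:(lra)). rewrite exp_Ropp, exp_ln in H0 by auto.
  apply Rmult_lt_compat_l with (r := y) in H0; [|lra]. rewrite Rinv_r in H0 by lra. nra.
Qed.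

Lemma fenchel : forall t x, 0 <= t < 1 -> 0 <= x <= 1 -> x * Ah t - Bh t <= q x.
Proof.
  intros t x Ht Hx. unfold q, Ah, Bh.
  pose proof (gibbs (1 + x) (1 + t) ltac:(lra) ltac:(lra)).
  pose proof (gibbs (1 - x) (1 - t) ltac:(lra) ltac:(lra)).
  lra.
Qed.

Lemma fenchel_eq : forall t, q t = t * Ah t - Bh t.
Proof. intros. unfold q, Ah, Bh. field. Qed.

Lemma q_nonneg : forall x, 0 <= x <= 1 -> 0 <= q x.
Proof.
  intros. pose proof (fenchel 0 x ltac:(lra) H). unfold Ah, Bh in H0.
  replace (1 + 0) with 1 in H0 by ring. replace (1 - 0) with 1 in H0 by ring. rewrite ln_1 in H0. lra.
Qed.

Lemma q_pos : forall x, 0 < x < 1 -> 0 < q x.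
Proof.
  intros x Hx. unfold q.
  pose proof (ylny_strict (1 + x) ltac:(lra) ltac:(lra)).
  pose proof (ylny_strict (1 - x) ltac:(lra) ltac:(lra)).
  lra.
Qed.

Lemma Ah_nonneg : forall t, 0 <= t < 1 -> 0 <= Ah t.
Proof.
  intros t Ht. unfold Ah. assert (ln (1 - t) <= ln (1 + t)) by (apply ln_le; lra). lra.
Qed.

Lemma Bh_mono : forall t s, 0 <= t <= s -> s < 1 -> Bh t <= Bh s.
Proof.
  intros t s H1 H2. unfold Bh. rewrite <- !ln_mult by lra.
  assert (ln ((1 + s) * (1 - s)) <= ln ((1 + t) * (1 - t))) by (apply ln_le; nra). lra.
Qed.

Lemma dlam_gt2 : forall l, 2 < l -> dlam l = 1 - 2 / l.
Proof.
  intros l Hl. unfold dlam. rewrite fpin_gt2 by auto.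
  assert (E : exp (- 2 * (ln l - ln 2 - ln (l - 1) / 2)) = 4 * (l - 1) / (l * l)).
  { replace (- 2 * (ln l - ln 2 - ln (l - 1) / 2)) with (ln 2 + ln 2 + ln (l - 1) + - ln l + - ln l) by field.
    rewrite !exp_plus, !exp_Ropp, !exp_ln by lra. field. lra. }
  rewrite E. replace (1 - 4 * (l - 1) / (l * l)) with ((1 - 2 / l)²) by (unfold Rsqr; field; lra).
  apply sqrt_Rsqr. assert (2 / l < 1) by (apply Rlt_div_l; lra). lra.
Qed.

Lemma dlam_le2 : forall l, l <= 2 -> dlam l = 0.
Proof. intros l Hl. unfold dlam. rewrite fpin_le2 by auto. replace (-2 * 0) with 0 by ring. rewrite exp_0. replace (1 - 1) with 0 by ring. apply sqrt_0. Qed.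

Lemma dlam_range : forall l, 0 <= dlam l < 1.
Proof.
  intros l. destruct (Rlt_dec 2 l).
  - rewrite dlam_gt2 by auto. assert (0 < 2 / l) by (apply Rdiv_lt_0_compat; lra).
    assert (2 / l < 1) by (apply Rlt_div_l; lra). lra.
  - rewrite dlam_le2 by lra. lra.
Qed.

Lemma AB_dlam_gt2 : forall l, 2 < l -> Bh (dlam l) = fpin l /\ Ah (dlam l) = ln (l - 1) / 2
  /\ (1 + dlam l) / (1 - dlam l) = l - 1.
Proof.
  intros l Hl. rewrite dlam_gt2 by auto. unfold Bh, Ah.
  replace (1 + (1 - 2 / l)) with (2 * (l - 1) / l) by (field; lra).
  replace (1 - (1 - 2 / l)) with (2 / l) by (field; lra).
  rewrite fpin_gt2 by auto.
  rewrite !ln_div, !ln_mult by (try apply Rmult_lt_0_compat; lra).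
  split; [field|split; [field|field; lra]].
Qed.

Lemma B_fpin : forall l, Bh (dlam l) = fpin l.
Proof.
  intros l. destruct (Rlt_dec 2 l). apply AB_dlam_gt2; auto.
  rewrite dlam_le2, fpin_le2 by lra. unfold Bh. replace (1 + 0) with 1 by ring. replace (1 - 0) with 1 by ring. rewrite ln_1. field.
Qed.

Lemma gvar_form : forall l a d, 0 < d -> gvar l a d = fpin l - 2 * a / d * (fpin l + q d).
Proof. intros. unfold gvar. field. lra. Qed.

Definition dstar (l a : R) : R := Rmax (2 * a) (dlam l).

Lemma dstar_max : forall l a d, 0 < a < 1/2 -> 2 * a <= d <= 1 -> gvar l a d <= gvar l a (dstar l a).
Proof.
  intros l a d Ha Hd. unfold dstar. pose proof (dlam_range l) as HT.
  set (T := dlam l) in *. rewrite !gvar_form by (try apply (Rlt_le_trans _ (2*a)); try apply Rmax_l; lra).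
  rewrite <- (B_fpin l). fold T.
  assert (Hda : 0 < 2 * a / d <= 1).
  { split. apply Rdiv_lt_0_compat; lra. apply Rle_div_l; lra. }
  unfold Rmax. destruct (Rle_dec (2 * a) T).
  -
    pose proof (fenchel T d HT ltac:(lra)). pose proof (fenchel_eq T).
    assert (HT0 : 0 < T) by lra.
    assert (E1 : 2 * a / d * (Bh T + q d) >= 2 * a * Ah T).
    { replace (2 * a * Ah T) with (2 * a / d * (d * Ah T)) by (field; lra).
      apply Rle_ge, Rmult_le_compat_l; lra. }
    assert (E2 : 2 * a / T * (Bh T + q T) = 2 * a * Ah T) by (rewrite H0; field; lra).
    lra.
  -
    assert (Ht : 0 <= 2 * a < 1) by lra.
    pose proof (fenchel (2 * a) d Ht ltac:(lra)). pose proof (fenchel_eq (2 * a)).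
    pose proof (Bh_mono T (2 * a) ltac:(lra) ltac:(lra)).
    assert (E2 : 2 * a / (2 * a) * (Bh T + q (2 * a)) = Bh T + q (2 * a)) by (field; lra).
    rewrite E2.
    assert (2 * a / d * (Bh T + q d) >= 2 * a / d * (Bh T - Bh (2 * a)) + 2 * a * Ah (2 * a)).
    { replace (2 * a * Ah (2 * a)) with (2 * a / d * (d * Ah (2 * a))) by (field; lra).
      rewrite <- Rmult_plus_distr_l. apply Rle_ge, Rmult_le_compat_l; lra. }
    assert (2 * a / d * (Bh T - Bh (2 * a)) >= Bh T - Bh (2 * a)).
    { apply Rle_ge. replace (Bh T - Bh (2 * a)) with (- (Bh (2 * a) - Bh T)) by ring.
      assert (2 * a / d * (Bh (2 * a) - Bh T) <= Bh (2 * a) - Bh T).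
      { rewrite <- (Rmult_1_l (Bh (2 * a) - Bh T)) at 2. apply Rmult_le_compat_r; lra. }
      lra. }
    lra.
Qed.

Lemma Phi_gvar : forall l a, 0 < a < 1/2 -> Phi l a = Rmax 0 (gvar l a (dstar l a)).
Proof.
  intros l a Ha. unfold dstar. pose proof (dlam_range l) as HT.
  unfold Rmax at 2. destruct (Rle_dec (2 * a) (dlam l)).
  - assert (Hl : 2 < l).
    { destruct (Rlt_dec 2 l); auto. rewrite dlam_le2 in r by lra. lra. }
    destruct (AB_dlam_gt2 l Hl) as [E1 [E2 E3]].
    rewrite gvar_form by lra. rewrite <- E1 at 2.
    rewrite fenchel_eq, E1, E2. unfold Phi. destruct (Rlt_dec 2 l); [|lra].
    f_equal. field. lra.
  - rewrite gvar_form by lra. rewrite <- (B_fpin l).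
    replace (Bh (dlam l) - 2 * a / (2 * a) * (Bh (dlam l) + q (2 * a))) with (- q (2 * a)) by (field; lra).
    pose proof (q_nonneg (2 * a) ltac:(lra)).
    rewrite Rmax_left by lra.
    unfold Phi. destruct (Rlt_dec 2 l); auto.
    destruct (AB_dlam_gt2 l r) as [E1 [E2 E3]].
    apply Rmax_left. rewrite <- E1.
    replace (a * ln (l - 1)) with (2 * a * Ah (dlam l)) by (rewrite E2; field).
    pose proof (fenchel_eq (dlam l)). pose proof (q_nonneg (dlam l) ltac:(lra)).
    pose proof (Ah_nonneg (dlam l) HT).
    assert (dlam l * Ah (dlam l) <= 2 * a * Ah (dlam l)) by (apply Rmult_le_compat_r; lra).
    lra.
Qed.

Lemma Ffree_Phi : forall l a, 0 < l -> 0 < a < 1/2 -> Ffree l a = Phi l a.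
Proof.
  intros l a Hl Ha. unfold Ffree. change (fun n => ln (Zpart l a (2 * n)) / INR (2 * n) - ln 2) with (useq l a).
  rewrite (is_lim_seq_unique _ _ (lim_main l a Hl Ha)). reflexivity.
Qed.

Definition hf (a l : R) : R := fpin l - a * ln (l - 1).

Lemma hf_neg : forall a l, 0 < a < 1/2 -> 2 < l -> dlam l <= 2 * a -> hf a l < 0.
Proof.
  intros a l Ha Hl HT. destruct (AB_dlam_gt2 l Hl) as [E1 [E2 E3]].
  pose proof (dlam_range l). unfold hf. rewrite <- E1.
  replace (a * ln (l - 1)) with (2 * a * Ah (dlam l)) by (rewrite E2; field).
  assert (0 < dlam l) by (rewrite dlam_gt2 by auto; assert (2 / l < 1) by (apply Rlt_div_l; lra); lra).
  pose proof (q_pos (dlam l) ltac:(lra)). rewrite fenchel_eq in H1.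
  pose proof (Ah_nonneg (dlam l) H).
  assert (dlam l * Ah (dlam l) <= 2 * a * Ah (dlam l)) by (apply Rmult_le_compat_r; lra). lra.
Qed.

Lemma hf_strict : forall a l1 l2, 0 < a < 1/2 -> 2 < l1 < l2 -> 2 * a < dlam l1 -> hf a l1 < hf a l2.
Proof.
  intros a l1 l2 Ha Hl HT.
  destruct (AB_dlam_gt2 l1 ltac:(lra)) as [E1 [E2 _]].
  destruct (AB_dlam_gt2 l2 ltac:(lra)) as [F1 [F2 _]].
  pose proof (dlam_range l1). pose proof (dlam_range l2).
  pose proof (fenchel (dlam l2) (dlam l1) H0 ltac:(lra)). rewrite fenchel_eq in H1.
  unfold hf. rewrite <- E1, <- F1.
  replace (a * ln (l1 - 1)) with (2 * a * Ah (dlam l1)) by (rewrite E2; field).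
  replace (a * ln (l2 - 1)) with (2 * a * Ah (dlam l2)) by (rewrite F2; field).
  assert (Ah (dlam l1) < Ah (dlam l2)) by (rewrite E2, F2; assert (ln (l1 - 1) < ln (l2 - 1)) by (apply ln_increasing; lra); lra).
  assert ((dlam l1 - 2 * a) * (Ah (dlam l2) - Ah (dlam l1)) > 0) by (apply Rmult_gt_0_compat; lra).
  nra.
Qed.

Lemma hf_root_T : forall a l, 0 < a < 1/2 -> 2 < l -> hf a l = 0 -> 2 * a < dlam l.
Proof.
  intros a l Ha Hl H. destruct (Rlt_le_dec (2 * a) (dlam l)); auto.
  pose proof (hf_neg a l Ha Hl r). lra.
Qed.

Lemma hf_uniq : forall a l1 l2, 0 < a < 1/2 -> 2 < l1 -> 2 < l2 -> hf a l1 = 0 -> hf a l2 = 0 -> l1 = l2.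
Proof.
  intros a l1 l2 Ha H1 H2 E1 E2. destruct (Rtotal_order l1 l2) as [H|[H|H]]; auto.
  - pose proof (hf_strict a l1 l2 Ha ltac:(lra) (hf_root_T a l1 Ha H1 E1)). lra.
  - pose proof (hf_strict a l2 l1 Ha ltac:(lra) (hf_root_T a l2 Ha H2 E2)). lra.
Qed.

Definition hg (a l : R) : R := ln l - ln 2 - (1/2 + a) * ln (l - 1).

Lemma hf_hg : forall a l, 2 < l -> hf a l = hg a l.
Proof. intros. unfold hf, hg. rewrite fpin_gt2 by auto. field. Qed.

Lemma hg_derive : forall a l, 1 < l -> is_derive (hg a) l (1 / l - (1/2 + a) / (l - 1)).
Proof.
  intros a l Hl. unfold hg. auto_derive.
  - repeat split; lra.
  - field. lra.
Qed.

Lemma hg_cont : forall a l, 1 < l -> continuity_pt (hg a) l.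
Proof.
  intros a l Hl. apply continuity_pt_filterlim. apply (ex_derive_continuous (hg a)).
  eexists. apply hg_derive; auto.
Qed.

Lemma crit_exists : forall a, 0 < a < 1/2 -> exists lc, 2 < lc /\ hf a lc = 0.
Proof.
  intros a Ha.
  set (l1 := 2 / (1 - 2 * a)).
  assert (Hl1 : 2 < l1) by (unfold l1; apply Rlt_div_r; lra).
  assert (Hd1 : dlam l1 = 2 * a) by (rewrite dlam_gt2 by auto; unfold l1; field; lra).
  assert (Hneg : hg a l1 < 0) by (rewrite <- hf_hg by auto; apply hf_neg; lra).
  set (l2 := Rmax (l1 + 1) (1 + exp (2 * ln 2 / (1/2 - a)))).
  assert (Hl2 : l1 < l2) by (unfold l2; pose proof (Rmax_l (l1 + 1) (1 + exp (2 * ln 2 / (1/2 - a)))); lra).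
  assert (Hpos : 0 < hg a l2).
  { unfold hg.
    assert (Hb : exp (2 * ln 2 / (1/2 - a)) <= l2 - 1) by (unfold l2; pose proof (Rmax_r (l1 + 1) (1 + exp (2 * ln 2 / (1/2 - a)))); lra).
    assert (Hlb : 2 * ln 2 / (1/2 - a) <= ln (l2 - 1)) by (rewrite <- (ln_exp (2 * ln 2 / (1/2 - a))); apply ln_le; [apply exp_pos|auto]).
    assert (ln (l2 - 1) <= ln l2) by (apply ln_le; lra).
    assert (Hln2 : 0 < ln 2) by (rewrite <- ln_1; apply ln_increasing; lra).
    assert ((1/2 - a) * ln (l2 - 1) >= 2 * ln 2).
    { apply Rle_ge. replace (2 * ln 2) with ((1/2 - a) * (2 * ln 2 / (1/2 - a))) by (field; lra).
      apply Rmult_le_compat_l; lra. }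
    lra. }
  destruct (Ranalysis5.IVT_interv (hg a) l1 l2) as [z [Hz1 Hz2]]; auto.
  { intros z Hz. apply hg_cont. lra. }
  exists z. split; [lra|]. rewrite hf_hg by lra. auto.
Qed.

Lemma Ffree_hf_pos : forall a l, 0 < a < 1/2 -> 2 < l -> 0 <= hf a l -> Ffree l a = hf a l.
Proof.
  intros a l Ha Hl H. rewrite Ffree_Phi by lra. unfold Phi. destruct (Rlt_dec 2 l); [|lra].
  apply Rmax_right. unfold hf in H. auto.
Qed.

Lemma deriv_part : forall a lc, 0 < a < 1/2 -> 2 < lc -> fpin lc = a * ln (lc - 1) ->
  exists l, 0 < l /\ filterlim (fun lam => (Ffree lam a - Ffree lc a) / (lam - lc)) (at_right lc) (locally l).
Proof.
  intros a lc Ha Hlc Hf.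
  assert (H0 : hf a lc = 0) by (unfold hf; lra).
  pose proof (hf_root_T a lc Ha Hlc H0) as HT. rewrite dlam_gt2 in HT by auto.
  exists (1 / lc - (1/2 + a) / (lc - 1)). split.
  { assert (Hk : 2 < lc * (1 - 2 * a)).
    { assert (2 / lc < 1 - 2 * a) by lra. apply Rlt_div_l in H; lra. }
    replace (1 / lc - (1 / 2 + a) / (lc - 1)) with ((lc * (1 - 2 * a) - 2) / (2 * lc * (lc - 1))) by (field; lra).
    apply Rdiv_lt_0_compat; [lra|]. apply Rmult_lt_0_compat; lra. }
  pose proof (hg_derive a lc ltac:(lra)) as Hd. apply is_derive_Reals in Hd.
  apply filterlim_locally. intros eps.
  destruct (Hd eps (cond_pos eps)) as [del Hdel].
  exists del. intros y Hy Hyl.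
  change (ball lc del y) with (Rabs (y - lc) < del) in Hy.
  change (ball (1 / lc - (1 / 2 + a) / (lc - 1)) eps ((Ffree y a - Ffree lc a) / (y - lc))) with
    (Rabs ((Ffree y a - Ffree lc a) / (y - lc) - (1 / lc - (1 / 2 + a) / (lc - 1))) < eps).
  assert (Hy2 : hf a lc < hf a y) by (apply hf_strict; [auto | lra | rewrite dlam_gt2 by lra; lra]).
  rewrite (Ffree_hf_pos a y Ha ltac:(lra) ltac:(lra)), (Ffree_hf_pos a lc Ha Hlc ltac:(lra)).
  rewrite !hf_hg by lra.
  assert (Hne : (y - lc : R) <> 0) by (simpl in *; lra).
  specialize (Hdel (y - lc) Hne Hy). rewrite Rplus_minus in Hdel. auto.
Qed.

Definition geo (n : nat) : R := (-1) ^ n.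

Lemma pow_le1 : forall r n, 0 <= r <= 1 -> r ^ n <= 1.
Proof. intros r n H; induction n; simpl; [lra|]. pose proof (pow_le r n (proj1 H)). nra. Qed.



Lemma is_series_zero : is_series (fun _ : nat => 0) 0.
Proof.
  apply is_series_Reals. intros eps He. exists O. intros n _. unfold R_dist.
  rewrite sum_cte. rewrite Rmult_0_l, Rminus_0_r, Rabs_R0. lra.
Qed.

Lemma is_series_single : forall c, is_series (fun n => if Nat.eqb n 0 then c else 0) c.
Proof.
  intros c. apply is_series_decr_1. simpl.
  replace (plus c (opp c)) with 0 by (unfold plus, opp; simpl; ring). apply is_series_zero.
Qed.

Lemma geo_sum : forall t, Rabs t < 1 -> is_series (fun n => geo n * t ^ n) (/ (1 + t)).
Proof.
  intros t Ht. assert (H : Rabs (- t) < 1) by (rewrite Rabs_Ropp; auto).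
  pose proof (is_series_geom _ H). replace (1 - - t) with (1 + t) in H0 by ring.
  eapply is_series_ext; [|apply H0]. intros n. unfold geo.
  replace (- t) with ((-1) * t) by ring. apply Rpow_mult_distr.
Qed.

Lemma CV_geo : forall x, Rabs x < 1 -> Rbar_lt (Rabs x) (CV_radius geo).
Proof.
  intros x Hx. set (r := (1 + Rabs x) / 2).
  pose proof (CV_radius_bounded geo) as [Hub _].
  assert (Hr : Rbar_le r (CV_radius geo)).
  { apply Hub. exists 1. intros n. unfold geo. rewrite <- Rpow_mult_distr, <- RPow_abs.
    apply pow_le1. pose proof (Rabs_pos x). split; [apply Rabs_pos|].
    replace (-1 * r) with (- r) by ring. rewrite Rabs_Ropp. unfold r. rewrite Rabs_pos_eq; lra. }
  eapply Rbar_lt_le_trans; [|apply Hr]. simpl. unfold r. lra.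
Qed.

Lemma ln1p_series : forall u, Rabs u < 1 -> is_series (fun n => PS_Int geo n * u ^ n) (ln (1 + u)).
Proof.
  intros u Hu.
  pose proof (is_pseries_RInt geo u (CV_geo u Hu)) as H. apply is_pseries_R in H.
  replace (ln (1 + u)) with (RInt (PSeries geo) 0 u); auto.
  rewrite (RInt_ext _ (fun t => / (1 + t))).
  - apply is_RInt_unique.
    replace (ln (1 + u)) with (minus (ln (1 + u)) (ln (1 + 0))) by (rewrite Rplus_0_r, ln_1; unfold minus, plus, opp; simpl; ring).
    apply (is_RInt_derive (fun t => ln (1 + t))).
    + intros x Hx. assert (Rabs x < 1).
      { unfold Rmin, Rmax in Hx. destruct (Rle_dec 0 u); apply Rabs_def1; apply Rabs_def2 in Hu; lra. }
      apply Rabs_def2 in H0. auto_derive. lra. field. lra.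
    + intros x Hx. assert (Rabs x < 1).
      { unfold Rmin, Rmax in Hx. destruct (Rle_dec 0 u); apply Rabs_def1; apply Rabs_def2 in Hu; lra. }
      apply Rabs_def2 in H0. apply (ex_derive_continuous (fun t => / (1 + t))). auto_derive. lra.
  - intros x Hx. assert (Rabs x < 1).
    { unfold Rmin, Rmax in Hx. destruct (Rle_dec 0 u); apply Rabs_def1; apply Rabs_def2 in Hu; lra. }
    apply is_pseries_unique. apply is_pseries_R. apply geo_sum; auto.
Qed.

Definition ec (b : R) (n : nat) : R := (if Nat.eqb n 0 then ln b else 0) + PS_Int geo n / b ^ n.

Lemma lnb_series : forall b y, 0 < b -> Rabs y < b -> is_series (fun n => ec b n * y ^ n) (ln (b + y)).
Proof.
  intros b y Hb Hy.
  assert (Hu : Rabs (y / b) < 1).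
  { unfold Rdiv. rewrite Rabs_mult, Rabs_inv, (Rabs_pos_eq b) by lra. apply Rlt_div_l; lra. }
  pose proof (ln1p_series _ Hu) as H1. pose proof (is_series_single (ln b)) as H0.
  pose proof (is_series_plus _ _ _ _ H0 H1) as H.
  replace (ln (b + y)) with (plus (ln b) (ln (1 + y / b))).
  - eapply is_series_ext; [|apply H]. intros n. unfold ec, plus; simpl.
    destruct (Nat.eqb_spec n 0).
    + subst. simpl. unfold PS_Int. field.
    + unfold Rdiv. rewrite Rpow_mult_distr, pow_inv. ring.
  - unfold plus; simpl. rewrite <- ln_mult by (try apply Rabs_def2 in Hu; try lra; apply Rabs_def2 in Hu; unfold Rdiv in Hu; lra).
    f_equal. field. lra.
Qed.

Lemma PS_Int_geo_bound : forall n, Rabs (PS_Int geo n) <= 1.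
Proof.
  intros [|n]; unfold PS_Int. rewrite Rabs_R0; lra.
  unfold geo. unfold Rdiv. rewrite Rabs_mult, <- RPow_abs, Rabs_m1, pow1, Rmult_1_l.
  rewrite Rabs_inv. rewrite S_INR. pose proof (pos_INR n). rewrite Rabs_pos_eq by lra.
  rewrite <- Rinv_1. apply Rinv_le_contravar; lra.
Qed.

Lemma sum2 : forall (f : nat -> R) m, (forall i, (2 <= i)%nat -> f i = 0) -> sum_f_R0 f (S m) = f O + f 1%nat.
Proof.
  intros f m H. induction m. simpl. ring.
  simpl sum_f_R0 in *. rewrite IHm. rewrite (H (S (S m))) by lia. ring.
Qed.

Lemma ln_lip : forall x y m, 0 < m -> m <= x -> m <= y -> Rabs (ln x - ln y) <= Rabs (x - y) / m.
Proof.
  intros x y m Hm Hx Hy.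
  assert (H1 : ln x - ln y <= (x - y) / y).
  { rewrite <- ln_div by lra. pose proof (exp_ineq1_le (ln (x / y))). rewrite exp_ln in H by (apply Rdiv_lt_0_compat; lra).
    replace ((x - y) / y) with (x / y - 1) by (field; lra). lra. }
  assert (H2 : ln y - ln x <= (y - x) / x).
  { rewrite <- ln_div by lra. pose proof (exp_ineq1_le (ln (y / x))). rewrite exp_ln in H by (apply Rdiv_lt_0_compat; lra).
    replace ((y - x) / x) with (y / x - 1) by (field; lra). lra. }
  assert (Rabs (x - y) / y <= Rabs (x - y) / m).
  { unfold Rdiv. apply Rmult_le_compat_l. apply Rabs_pos. apply Rinv_le_contravar; lra. }
  assert (Rabs (x - y) / x <= Rabs (x - y) / m).
  { unfold Rdiv. apply Rmult_le_compat_l. apply Rabs_pos. apply Rinv_le_contravar; lra. }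
  assert ((x - y) / y <= Rabs (x - y) / y).
  { unfold Rdiv. apply Rmult_le_compat_r. left; apply Rinv_0_lt_compat; lra. apply Rle_abs. }
  assert ((y - x) / x <= Rabs (x - y) / x).
  { unfold Rdiv. apply Rmult_le_compat_r. left; apply Rinv_0_lt_compat; lra. rewrite Rabs_minus_sym. apply Rle_abs. }
  apply Rabs_le. lra.
Qed.

Lemma hg_close : forall a0 lam0 a lam r, 0 < a0 < 1/2 -> 2 < lam0 -> r <= (lam0 - 2) / 2 ->
  Rabs (a - a0) < r -> Rabs (lam - lam0) < r -> 0 < a < 1/2 ->
  Rabs (hg a lam - hg a0 lam0) <= r * (2 + Rabs (ln (lam0 - 1))).
Proof.
  intros a0 lam0 a lam r Ha0 Hl0 Hr Ha Hl Ha2.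
  apply Rabs_def2 in Ha. apply Rabs_def2 in Hl. destruct Ha as [Ha1 Ha3]. destruct Hl as [Hl1 Hl2].
  assert (L1 : Rabs (ln lam - ln lam0) <= r).
  { eapply Rle_trans; [apply (ln_lip _ _ 1); lra|]. unfold Rdiv. rewrite Rinv_1, Rmult_1_r. apply Rabs_le; lra. }
  assert (L2 : Rabs (ln (lam - 1) - ln (lam0 - 1)) <= r).
  { eapply Rle_trans; [apply (ln_lip _ _ 1); lra|]. unfold Rdiv. rewrite Rinv_1, Rmult_1_r. apply Rabs_le; lra. }
  unfold hg.
  replace (ln lam - ln 2 - (1 / 2 + a) * ln (lam - 1) - (ln lam0 - ln 2 - (1 / 2 + a0) * ln (lam0 - 1))) with
    ((ln lam - ln lam0) - (1/2 + a) * (ln (lam - 1) - ln (lam0 - 1)) - (a - a0) * ln (lam0 - 1)) by ring.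
  eapply Rle_trans; [apply Rabs_triang|]. eapply Rle_trans; [apply Rplus_le_compat_r; apply Rabs_triang|].
  rewrite !Rabs_Ropp, !Rabs_mult.
  assert (Rabs (1/2 + a) <= 1) by (apply Rabs_le; lra).
  assert (Rabs (a - a0) <= r) by (apply Rabs_le; lra).
  pose proof (Rabs_pos (ln (lam - 1) - ln (lam0 - 1))). pose proof (Rabs_pos (ln (lam0 - 1))).
  pose proof (Rabs_pos (1/2 + a)). pose proof (Rabs_pos (a - a0)).
  assert (Rabs (1 / 2 + a) * Rabs (ln (lam - 1) - ln (lam0 - 1)) <= 1 * r) by (apply Rmult_le_compat; auto).
  assert (Rabs (a - a0) * Rabs (ln (lam0 - 1)) <= r * Rabs (ln (lam0 - 1))) by (apply Rmult_le_compat; lra).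
  lra.
Qed.

Lemma isR_plus : forall a b la lb, is_series a la -> is_series b lb -> is_series (fun n => a n + b n) (la + lb).
Proof. intros. exact (is_series_plus a b la lb H H0). Qed.
Lemma isR_scal : forall c a l, is_series a l -> is_series (fun n => c * a n) (c * l).
Proof. intros. exact (is_series_scal c a l H). Qed.
Lemma isR_val : forall a (l l' : R), l = l' -> is_series a l -> is_series a l'.
Proof. intros; subst; auto. Qed.
Lemma exR_le : forall a b, (forall n, Rabs (a n) <= b n) -> ex_series b -> ex_series a.
Proof. intros. apply (ex_series_le a b); auto. Qed.
Lemma exR_scal : forall c a, ex_series a -> ex_series (fun n => c * a n).
Proof. intros. exact (ex_series_scal c a H). Qed.
Lemma exR_plus : forall a b, ex_series a -> ex_series b -> ex_series (fun n => a n + b n).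
Proof. intros. exact (ex_series_plus a b H H0). Qed.

Lemma analytic_zero : forall F x0 y0 r, 0 < r -> (forall x y, Rabs (x - x0) < r -> Rabs (y - y0) < r -> F x y = 0) ->
  analytic_at2 F x0 y0.
Proof.
  intros F x0 y0 r Hr HF. exists r. split; auto. exists (fun _ _ => 0). intros x y Hx Hy.
  assert (E : forall (g : nat -> R) n, (forall i, g i = 0) -> sum_f_R0 g n = 0).
  { intros g n Hg. induction n; simpl; rewrite ?IHn, Hg; ring. }
  split.
  - apply (ex_series_ext (fun _ => 0)). intros n. symmetry. apply E. intros i. rewrite !Rmult_0_l. apply Rabs_R0.
    exists 0. apply is_series_zero.
  - rewrite HF by auto. apply (is_series_ext (fun _ => 0)). intros n. symmetry. apply E. intros i. ring.
    apply is_series_zero.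
Qed.

Lemma ec_bound : forall b Y k, 0 < b -> Rabs (ec b k * Y ^ k) <= (Rabs (ln b) + 1) * (Rabs Y / b) ^ k.
Proof.
  intros b Y k Hb. unfold ec. rewrite Rabs_mult, <- RPow_abs.
  destruct k.
  - simpl. unfold PS_Int. replace (ln b + 0 / 1) with (ln b) by field. lra.
  - simpl Nat.eqb. rewrite Rplus_0_l. unfold Rdiv at 1. rewrite Rabs_mult, Rabs_inv, <- RPow_abs, (Rabs_pos_eq b) by lra.
    pose proof (PS_Int_geo_bound (S k)). pose proof (Rabs_pos (ln b)).
    assert (E : (Rabs Y / b) ^ S k = Rabs Y ^ S k * / b ^ S k) by (unfold Rdiv; rewrite Rpow_mult_distr, pow_inv; ring).
    rewrite E. assert (0 <= Rabs Y ^ S k * / b ^ S k).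
    { apply Rmult_le_pos. apply pow_le, Rabs_pos. left. apply Rinv_0_lt_compat, pow_lt; auto. }
    assert (0 <= / b ^ S k) by (left; apply Rinv_0_lt_compat, pow_lt; auto).
    assert (0 <= Rabs Y ^ S k) by (apply pow_le, Rabs_pos).
    replace (Rabs (PS_Int geo (S k)) * / b ^ S k * Rabs Y ^ S k) with (Rabs (PS_Int geo (S k)) * (Rabs Y ^ S k * / b ^ S k)) by ring.
    apply Rle_trans with (1 * (Rabs Y ^ S k * / b ^ S k)). apply Rmult_le_compat_r; auto. nra.
Qed.

Definition cc (a0 lam0 : R) (i n : nat) : R :=
  match i with
  | O => ec lam0 n - (1/2 + a0) * ec (lam0 - 1) n - (if Nat.eqb n 0 then ln 2 else 0)
  | 1%nat => - ec (lam0 - 1) n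
  | _ => 0
  end.

Lemma analytic_hg : forall F a0 lam0 r, 0 < a0 < 1/2 -> 2 < lam0 -> 0 < r <= (lam0 - 2) / 2 ->
  (forall x y, Rabs (x - a0) < r -> Rabs (y - lam0) < r -> F x y = hg x y) -> analytic_at2 F a0 lam0.
Proof.
  intros F a0 lam0 r Ha0 Hl0 Hr HF. exists r. split; [lra|]. exists (cc a0 lam0). intros x y Hx Hy.
  set (X := x - a0) in *. set (Y := y - lam0) in *. set (be := lam0 - 1).
  assert (HYb : Rabs Y < be) by (unfold be; lra).
  assert (HYl : Rabs Y < lam0) by lra.
  assert (Hbe : 1 < be) by (unfold be; lra).
  set (q := Rabs Y / be).
  assert (Hq : 0 <= q < 1) by (unfold q; split; [apply Rmult_le_pos; [apply Rabs_pos|left; apply Rinv_0_lt_compat; lra]|apply Rlt_div_l; lra]).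
  assert (Hql : Rabs Y / lam0 <= q).
  { unfold q, Rdiv. apply Rmult_le_compat_l. apply Rabs_pos. apply Rinv_le_contravar; unfold be; lra. }
  assert (Dsum : forall (g : nat -> nat -> R) n, (forall i m, (2 <= i)%nat -> g i m = 0) ->
     sum_f_R0 (fun i => g i (n - i)%nat) n = g O n + match n with O => 0 | S m => g 1%nat m end).
  { intros g n Hg. destruct n. simpl. ring.
    rewrite (sum2 (fun i => g i (S n - i)%nat)). replace (S n - 1)%nat with n by lia. replace (S n - 0)%nat with (S n) by lia. ring.
    intros i Hi. apply Hg; auto. }
  split.
  - apply (ex_series_ext (fun n => Rabs (cc a0 lam0 O n * Y ^ n) + match n with O => 0 | S m => Rabs (cc a0 lam0 1 m * X * Y ^ m) end)).
    { intros n. rewrite (Dsum (fun i m => Rabs (cc a0 lam0 i m * X ^ i * Y ^ m))).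
      destruct n; simpl; f_equal; f_equal; ring. intros i m Hi. destruct i as [|[|i]]; try lia. simpl. rewrite !Rmult_0_l. apply Rabs_R0. }
    apply exR_plus.
    + set (C := (Rabs (ln lam0) + 1) + (1/2 + a0) * (Rabs (ln be) + 1) + Rabs (ln 2)).
      apply (exR_le _ (fun n => C * q ^ n)).
      2:{ apply (exR_scal C). apply ex_series_geom. rewrite Rabs_pos_eq; lra. }
      intros n. rewrite Rabs_Rabsolu. unfold cc.
      replace ((ec lam0 n - (1 / 2 + a0) * ec (lam0 - 1) n - (if Nat.eqb n 0 then ln 2 else 0)) * Y ^ n) with
        (ec lam0 n * Y ^ n + (- (1 / 2 + a0)) * (ec be n * Y ^ n) + (- (if Nat.eqb n 0 then ln 2 else 0) * Y ^ n)) by (unfold be; ring).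
      eapply Rle_trans; [apply Rabs_triang|]. eapply Rle_trans; [apply Rplus_le_compat_r, Rabs_triang|].
      rewrite Rabs_mult with (x := - (1/2 + a0)). rewrite Rabs_Ropp, (Rabs_pos_eq (1/2 + a0)) by lra.
      pose proof (ec_bound lam0 Y n ltac:(lra)). pose proof (ec_bound be Y n ltac:(lra)).
      assert (Hp1 : (Rabs Y / lam0) ^ n <= q ^ n) by (apply pow_incr; split; auto; apply Rmult_le_pos; [apply Rabs_pos|left; apply Rinv_0_lt_compat; lra]).
      assert (Hp3 : Rabs (- (if Nat.eqb n 0 then ln 2 else 0) * Y ^ n) <= Rabs (ln 2) * q ^ n).
      { destruct n; simpl. rewrite Rmult_1_r, Rabs_Ropp. lra. rewrite Ropp_0, Rmult_0_l, Rabs_R0. apply Rmult_le_pos. apply Rabs_pos. apply Rmult_le_pos; [lra|apply pow_le; lra]. }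
      pose proof (Rabs_pos (ln lam0)). pose proof (Rabs_pos (ln be)). pose proof (pow_le q n (proj1 Hq)).
      fold q in H0. unfold C.
      assert ((Rabs (ln lam0) + 1) * (Rabs Y / lam0) ^ n <= (Rabs (ln lam0) + 1) * q ^ n) by (apply Rmult_le_compat_l; lra).
      assert ((1 / 2 + a0) * Rabs (ec be n * Y ^ n) <= (1 / 2 + a0) * ((Rabs (ln be) + 1) * q ^ n)) by (apply Rmult_le_compat_l; lra).
      nra.
    + apply ex_series_incr_1.
      apply (exR_le _ (fun k => Rabs X * ((Rabs (ln be) + 1) * q ^ k))).
      2:{ apply (exR_scal (Rabs X)). apply (exR_scal (Rabs (ln be) + 1)). apply ex_series_geom. rewrite Rabs_pos_eq; lra. }
      intros k. rewrite Rabs_Rabsolu. unfold cc.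
      replace (- ec (lam0 - 1) k * X * Y ^ k) with (- X * (ec be k * Y ^ k)) by (unfold be; ring).
      rewrite Rabs_mult, Rabs_Ropp. apply Rmult_le_compat_l. apply Rabs_pos. apply ec_bound. lra.
  - apply (is_series_ext (fun n => cc a0 lam0 O n * Y ^ n + match n with O => 0 | S m => cc a0 lam0 1 m * X * Y ^ m end)).
    { intros n. rewrite (Dsum (fun i m => cc a0 lam0 i m * X ^ i * Y ^ m)).
      destruct n; simpl; f_equal; f_equal; ring. intros i m Hi. destruct i as [|[|i]]; try lia. simpl. ring. }
    rewrite HF by auto.
    replace (hg x y) with ((ln (lam0 + Y) - (1/2 + a0) * ln (be + Y) - ln 2) + X * (- ln (be + Y))).
    2:{ unfold hg, X, Y, be. replace (lam0 + (y - lam0)) with y by ring. replace (lam0 - 1 + (y - lam0)) with (y - 1) by ring. ring. }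
    apply isR_plus.
    + pose proof (lnb_series lam0 Y ltac:(lra) HYl) as S1.
      pose proof (isR_scal (- (1/2 + a0)) _ _ (lnb_series be Y ltac:(lra) HYb)) as S2.
      pose proof (isR_scal (-1) _ _ (is_series_single (ln 2))) as S3.
      pose proof (isR_plus _ _ _ _ (isR_plus _ _ _ _ S1 S2) S3) as S.
      replace (ln (lam0 + Y) - (1 / 2 + a0) * ln (be + Y) - ln 2) with
        (ln (lam0 + Y) + - (1 / 2 + a0) * ln (be + Y) + -1 * ln 2) by ring.
      eapply is_series_ext; [|apply S]. intros n. simpl. unfold cc. fold be.
      destruct n; simpl; ring.
    + apply is_series_decr_1.
      pose proof (isR_scal (- X) _ _ (lnb_series be Y ltac:(lra) HYb)) as S.
      eapply isR_val; [|eapply is_series_ext; [|apply S]].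
      unfold plus, opp; simpl; ring.
      intros n. simpl. unfold cc. fold be. ring.
Qed.

Lemma analytic_part : forall a0 lam0 : R, 0 < a0 < 1 / 2 -> 0 < lam0 ->
  ~ (2 < lam0 /\ fpin lam0 = a0 * ln (lam0 - 1)) ->
  analytic_at2 (fun a lam => Ffree lam a) a0 lam0.
Proof.
  intros a0 lam0 Ha0 Hl0 Hn.
  set (r0 := Rmin (Rmin (a0 / 2) ((1/2 - a0) / 2)) (lam0 / 2)).
  assert (Hr0 : 0 < r0) by (unfold r0; repeat apply Rmin_glb_lt; lra).
  assert (Hr0a : r0 <= a0 / 2) by (unfold r0; eapply Rle_trans; [apply Rmin_l|apply Rmin_l]).
  assert (Hr0b : r0 <= (1/2 - a0) / 2) by (unfold r0; eapply Rle_trans; [apply Rmin_l|apply Rmin_r]).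
  assert (Hr0c : r0 <= lam0 / 2) by (unfold r0; apply Rmin_r).
  assert (Hsq : forall r a lam, r <= r0 -> Rabs (a - a0) < r -> Rabs (lam - lam0) < r ->
     0 < a < 1/2 /\ 0 < lam /\ Ffree lam a = Phi lam a).
  { intros r a lam Hr Ha Hl. apply Rabs_def2 in Ha. apply Rabs_def2 in Hl.
    destruct Ha, Hl. assert (0 < a < 1/2) by lra. assert (0 < lam) by lra.
    split; auto. split; auto. apply Ffree_Phi; auto. }
  destruct (Rle_lt_dec lam0 2) as [Hle|Hgt].
  - apply (analytic_zero _ _ _ r0 Hr0). intros a lam Ha Hl.
    destruct (Hsq r0 a lam (Rle_refl _) Ha Hl) as [Ha' [Hl' E]]. rewrite E.
    unfold Phi. destruct (Rlt_dec 2 lam); auto.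
    apply Rmax_left. apply Rlt_le.
    apply Rabs_def2 in Ha. apply Rabs_def2 in Hl. destruct Ha, Hl.
    apply (hf_neg a lam Ha' r). rewrite dlam_gt2 by auto.
    assert (lam * (1 - a0) <= 2) by nra.
    assert (1 - 2 / lam <= a0).
    { replace (1 - 2 / lam) with ((lam - 2) / lam) by (field; lra). apply Rle_div_l; lra. }
    lra.
  - assert (Hh0 : hg a0 lam0 <> 0).
    { intros E. apply Hn. split; auto. rewrite <- hf_hg in E by auto. unfold hf in E. lra. }
    set (K := 2 + Rabs (ln (lam0 - 1))).
    assert (HK : 0 < K) by (unfold K; pose proof (Rabs_pos (ln (lam0 - 1))); lra).
    set (r := Rmin r0 (Rmin ((lam0 - 2) / 2) (Rabs (hg a0 lam0) / (2 * K)))).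
    assert (Habs : 0 < Rabs (hg a0 lam0)) by (apply Rabs_pos_lt; auto).
    assert (Hr : 0 < r) by (unfold r; repeat apply Rmin_glb_lt; try lra; apply Rdiv_lt_0_compat; lra).
    assert (Hr1 : r <= r0) by (unfold r; apply Rmin_l).
    assert (Hr2 : r <= (lam0 - 2) / 2) by (unfold r; eapply Rle_trans; [apply Rmin_r|apply Rmin_l]).
    assert (Hr3 : r <= Rabs (hg a0 lam0) / (2 * K)) by (unfold r; eapply Rle_trans; [apply Rmin_r|apply Rmin_r]).
    assert (Hclose : forall a lam, Rabs (a - a0) < r -> Rabs (lam - lam0) < r ->
       2 < lam /\ Rabs (hg a lam - hg a0 lam0) <= Rabs (hg a0 lam0) / 2).
    { intros a lam Ha Hl. destruct (Hsq r a lam Hr1 Ha Hl) as [Ha' [Hl' _]].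
      split. apply Rabs_def2 in Hl. destruct Hl. lra.
      eapply Rle_trans. apply (hg_close a0 lam0 a lam r); auto.
      fold K. apply Rle_trans with (Rabs (hg a0 lam0) / (2 * K) * K).
      apply Rmult_le_compat_r; lra. right. field. lra. }
    destruct (Rlt_le_dec (hg a0 lam0) 0) as [Hneg|Hpos].
    + apply (analytic_zero _ _ _ r Hr). intros a lam Ha Hl.
      destruct (Hsq r a lam Hr1 Ha Hl) as [Ha' [Hl' E]]. rewrite E.
      destruct (Hclose a lam Ha Hl) as [H2 Hc].
      rewrite (Rabs_left (hg a0 lam0)) in Hc by auto.
      pose proof (Rle_abs (hg a lam - hg a0 lam0)).
      unfold Phi. destruct (Rlt_dec 2 lam); [|lra].
      apply Rmax_left. fold (hf a lam). rewrite hf_hg by auto. lra.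
    + assert (Hpos' : 0 < hg a0 lam0) by (destruct Hpos; auto; exfalso; apply Hh0; auto).
      apply (analytic_hg _ a0 lam0 r Ha0 Hgt (conj Hr Hr2)). intros a lam Ha Hl.
      destruct (Hsq r a lam Hr1 Ha Hl) as [Ha' [Hl' E]]. rewrite E.
      destruct (Hclose a lam Ha Hl) as [H2 Hc].
      rewrite (Rabs_pos_eq (hg a0 lam0)) in Hc by lra.
      pose proof (Rle_abs (- (hg a lam - hg a0 lam0))). rewrite Rabs_Ropp in H.
      unfold Phi. destruct (Rlt_dec 2 lam); [|lra].
      fold (hf a lam). rewrite hf_hg by auto. apply Rmax_right. lra.
Qed.

Theorem proposition2p1 :
  (* limit, variational formula, optimiser *)
  (forall lam a : R, 0 < lam -> 0 < a < 1 / 2 ->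
     is_lim_seq (fun n => ln (Zpart lam a (2 * n)) / INR (2 * n) - ln 2) (Ffree lam a)
     /\ (exists dstar, 2 * a <= dstar <= 1
           /\ (forall d, 2 * a <= d <= 1 -> gvar lam a d <= gvar lam a dstar)
           /\ Ffree lam a = Rmax 0 (gvar lam a dstar))
     /\ (0 < Ffree lam a ->
           2 < lam
           /\ dlam lam = 1 - 2 / lam
           /\ 2 * a <= dlam lam <= 1
           /\ (forall d, 2 * a <= d <= 1 -> gvar lam a d <= gvar lam a (dlam lam))
           /\ Ffree lam a = Rmax 0 (gvar lam a (dlam lam))
           /\ Ffree lam a
              = Rmax 0 (fpin lam - a * ln ((1 + dlam lam) / (1 - dlam lam)))))
  (* the critical point lambda_c(a) *)
  /\ (forall a : R, 0 < a < 1 / 2 ->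
        exists! lc, 2 < lc /\ fpin lc = a * ln ((1 + dlam lc) / (1 - dlam lc))
                           /\ fpin lc = a * ln (lc - 1))
  (* first-order transition: positive right derivative at lambda_c(a) *)
  /\ (forall a lc : R, 0 < a < 1 / 2 -> 2 < lc -> fpin lc = a * ln (lc - 1) ->
        exists l, 0 < l /\
          filterlim (fun lam => (Ffree lam a - Ffree lc a) / (lam - lc))
                    (at_right lc) (locally l))
  (* analyticity off the critical curve *)
  /\ (forall a0 lam0 : R, 0 < a0 < 1 / 2 -> 0 < lam0 ->
        ~ (2 < lam0 /\ fpin lam0 = a0 * ln (lam0 - 1)) ->
        analytic_at2 (fun a lam => Ffree lam a) a0 lam0).
Proof.
  split; [|split; [|split]].
  - intros lam a Hl Ha. rewrite (Ffree_Phi lam a Hl Ha).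
    pose proof (dlam_range lam) as HT.
    split; [exact (lim_main lam a Hl Ha)|]. split.
    + exists (dstar lam a). split.
      { unfold dstar. split. apply Rmax_l. apply Rmax_lub; lra. }
      split. intros d Hd. apply dstar_max; auto. apply Phi_gvar; auto.
    + intros HP.
      assert (H2 : 2 < lam).
      { destruct (Rlt_dec 2 lam); auto. unfold Phi in HP. destruct (Rlt_dec 2 lam); lra. }
      assert (HT2 : 2 * a < dlam lam).
      { destruct (Rlt_le_dec (2 * a) (dlam lam)); auto.
        pose proof (hf_neg a lam Ha H2 r). unfold Phi in HP. destruct (Rlt_dec 2 lam); [|lra].
        rewrite Rmax_left in HP. lra. unfold hf in H. lra. }
      assert (Eds : dstar lam a = dlam lam) by (unfold dstar; apply Rmax_right; lra).
      destruct (AB_dlam_gt2 lam H2) as [E1 [E2 E3]].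
      split; auto. split. apply dlam_gt2; auto. split. lra. split.
      intros d Hd. rewrite <- Eds. apply dstar_max; auto.
      split. rewrite <- Eds. apply Phi_gvar; auto.
      rewrite E3. unfold Phi. destruct (Rlt_dec 2 lam); [auto|lra].
  - intros a Ha. destruct (crit_exists a Ha) as [lc [Hlc Hh]].
    exists lc. split.
    + destruct (AB_dlam_gt2 lc Hlc) as [_ [_ E3]]. rewrite E3. unfold hf in Hh. split; auto. split; lra.
    + intros l' [H1 [_ H3]]. apply (hf_uniq a lc l' Ha Hlc H1 Hh). unfold hf. lra.
  - intros a lc Ha Hlc Hf. apply deriv_part; auto.
  - intros a0 lam0 Ha0 Hl0 Hn. apply analytic_part; auto.
Qed.
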